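(* Let $z$ lie in a sufficiently small neighborhood of $\tfrac12$ and consider the germ in $Q$ $$H(Q)=\frac{1}{(w_1-w_0)(w_1-w_2)}(Q).$$ Then the only singular point of $H$ (among the possible singular points $Q_\pm(z)$) is $Q_+(z)$; $H$ is regular at $Q_-(z)$, and at $Q_+(z)$ it has an integrable singularity with two branches (continuing twice around $Q_+$ returns $H$).
   Context: $Q(w)=w(w-1)(w-z)$. Critical points $w_\pm(z)=\frac13(z+1)\pm\frac13(z^2-z+1)^{1/2}$ (principal root), critical values $Q_\pm(z)=Q(w_\pm(z))\approx\mp\frac{\sqrt3}{36}$. With $u=\frac{3z-(z+1)^2}{3}$, $v=\frac1{27}\big(-2(z+1)^3+9z(z+1)-27Q\big)$ and principal branches, $w_k(Q,z)=\frac{z+1}{3}+2\left(-\frac u3\right)^{1/2}\cos\!\Big(\frac13\arccos\Big(\frac{3v}{2u}\big(-\frac3u\big)^{1/2}\Big)+\theta_k\Big)$, $\theta_0=\frac{2\pi}3,\theta_1=0,\theta_2=-\frac{2\pi}3$: the three roots of $w(w-1)(w-z)=Q$, holomorphic near $(Q,z)=(0,\frac12)$ with $w_0(0,z)=0,w_1(0,z)=1,w_2(0,z)=z$, continued analytically in $Q$. *)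

(* Defs.v *)
From Stdlib Require Import Reals.
From Coquelicot Require Import Coquelicot.
Open Scope C_scope.

Definition Pz (z w : C) : C := w * (w - 1) * (w - z).

(** Principal complex square root (branch cut on the negative real axis,
    Re >= 0, and Im(sqrt x) >= 0 when x is real negative). *)
Definition Csqrt (x : C) : C :=
  (sqrt ((Cmod x + Re x) / 2),
   (if Rlt_dec (Im x) 0 then (-1)%R else 1%R) * sqrt ((Cmod x - Re x) / 2))%R.

(** Critical points w_pm(z) = (z+1)/3 +- (1/3) (z^2 - z + 1)^(1/2). *)
Definition w_plus (z : C) : C := (z + 1) / 3 + Csqrt (z * z - z + 1) / 3.
Definition w_minus (z : C) : C := (z + 1) / 3 - Csqrt (z * z - z + 1) / 3.

Definition Q_plus (z : C) : C := Pz z (w_plus z).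
Definition Q_minus (z : C) : C := Pz z (w_minus z).

Definition Cdisc (c : C) (r : R) (x : C) : Prop := (Cmod (x - c) < r)%R.

Definition holo_on (U : C -> Prop) (f : C -> C) : Prop :=
  forall x, U x -> ex_derive (K := C_AbsRing) (V := C_NormedModule) f x.

Definition Copen (U : C -> Prop) : Prop :=
  forall x, U x -> exists e : R, (0 < e)%R /\ forall y, Cdisc x e y -> U y.

Definition Cconvex (U : C -> Prop) : Prop :=
  forall x y (t : R), U x -> U y -> (0 <= t <= 1)%R -> U (x + RtoC t * (y - x)).

Definition root_germ (z : C) (rho : R) (c : C) (w : C -> C) : Prop :=
  holo_on (Cdisc 0 rho) w /\
  (forall Q, Cdisc 0 rho Q -> Pz z (w Q) = Q) /\
  w 0 = c.

Definition continues_germ (U : C -> Prop) (F H : C -> C) : Prop :=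
  U 0 /\ Copen U /\ holo_on U F /\
  exists e : R, (0 < e)%R /\ forall Q, Cdisc 0 e Q -> U Q /\ F Q = H Q.

(* Main.v *)
Require Import Defs.
From Stdlib Require Import Reals Lra Psatz ClassicalEpsilon Classical.
From Coquelicot Require Import Coquelicot.
Open Scope C_scope.

Ltac nzr := let H := fresh in intro H; (lra || nra).

Lemma Cmod_le_abs (c : C) : (Cmod c <= Rabs (Re c) + Rabs (Im c))%R.
Proof.
  unfold Cmod. destruct c as [a b]; simpl.
  assert (Ha := Rabs_pos a). assert (Hb := Rabs_pos b).
  rewrite <- (sqrt_Rsqr (Rabs a + Rabs b)) by lra.
  apply sqrt_le_1_alt. pose proof (Rsqr_abs a). pose proof (Rsqr_abs b). unfold Rsqr in *.
  nra.
Qed.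

Lemma im_le_Cmod' (c : C) : (Rabs (Im c) <= Cmod c)%R.
Proof.
  unfold Cmod. destruct c as [a b]; simpl.
  rewrite <- sqrt_Rsqr_abs. apply sqrt_le_1_alt. unfold Rsqr. nra.
Qed.

Lemma re_le_Cmod' (c : C) : (Re c <= Cmod c)%R.
Proof. pose proof (re_le_Cmod c). pose proof (Rle_abs (Re c)). lra. Qed.

Lemma Csqrt_re_ge0 x : (0 <= Re (Csqrt x))%R.
Proof. unfold Csqrt; simpl. apply sqrt_pos. Qed.

Lemma Cmod_ge_abs_re x : (Rabs (Re x) <= Cmod x)%R.
Proof. apply re_le_Cmod. Qed.

Lemma Csqrt_sq x : Csqrt x * Csqrt x = x.
Proof.
  destruct x as [r i]. unfold Csqrt. simpl.
  set (m := Cmod (r, i)).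
  assert (Hm2 : (m * m = r * r + i * i)%R).
  { unfold m. unfold Cmod. simpl. rewrite sqrt_sqrt; [ring|nra]. }
  assert (Hm0 : (0 <= m)%R) by apply Cmod_ge_0.
  assert (Hr : (Rabs r <= m)%R) by (apply (re_le_Cmod (r,i))).
  assert (Hr1 : (0 <= (m + r)/2)%R) by (pose proof (Rabs_le_between r m) ; pose proof (Rle_abs r); pose proof (Rle_abs (-r)); rewrite Rabs_Ropp in *; lra).
  assert (Hr2 : (0 <= (m - r)/2)%R) by (pose proof (Rle_abs r); lra).
  assert (HA : (sqrt ((m + r)/2) * sqrt ((m + r)/2) = (m+r)/2)%R) by (apply sqrt_sqrt; lra).
  assert (HB : (sqrt ((m - r)/2) * sqrt ((m - r)/2) = (m-r)/2)%R) by (apply sqrt_sqrt; lra).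
  assert (HAB : (sqrt ((m + r)/2) * sqrt ((m - r)/2) = Rabs i / 2)%R).
  { rewrite <- sqrt_mult by lra.
    replace ((m + r) / 2 * ((m - r) / 2))%R with (Rsqr (Rabs i / 2))%R.
    - apply sqrt_Rsqr. pose proof (Rabs_pos i); lra.
    - unfold Rsqr. replace ((Rabs i / 2 * (Rabs i / 2)))%R with (Rabs i * Rabs i / 4)%R by field.
      rewrite <- Rabs_mult. rewrite Rabs_right by nra. nra. }
  unfold Cmult; simpl. f_equal.
  - destruct (Rlt_dec i 0); nra.
  - destruct (Rlt_dec i 0).
    + rewrite Rabs_left in HAB by lra. nra.
    + rewrite Rabs_right in HAB by lra. nra.
Qed.

Lemma Cmult_integral (a b : C) : a * b = 0 -> a = 0 \/ b = 0.
Proof.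
  intros H. assert (Cmod (a * b) = 0%R) by (rewrite H; apply Cmod_0).
  rewrite Cmod_mult in H0. apply Rmult_integral in H0. destruct H0; [left|right]; apply Cmod_eq_0; auto.
Qed.
Lemma Csqrt_re_pos x : (0 < Re x)%R -> (0 < Re (Csqrt x))%R.
Proof.
  intros H. unfold Csqrt; simpl. apply sqrt_lt_R0.
  pose proof (re_le_Cmod' x). unfold Re in *. lra.
Qed.

Lemma Cmod_pos_lower_re a : (0 < Re a)%R -> (Re a <= Cmod a)%R.
Proof. intros; apply re_le_Cmod'. Qed.

Lemma Csqrt_lip x x0 : (0 < Re (Csqrt x0))%R ->
  (Cmod (Csqrt x - Csqrt x0) <= Cmod (x - x0) / Re (Csqrt x0))%R.
Proof.
  intros H.
  set (a := Csqrt x). set (b := Csqrt x0).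
  assert (E : x - x0 = (a - b) * (a + b)).
  { unfold a, b. rewrite <- (Csqrt_sq x) at 1. rewrite <- (Csqrt_sq x0) at 1. ring. }
  assert (Ha : (0 <= Re a)%R) by apply Csqrt_re_ge0.
  assert (Hb : (0 < Re b)%R) by exact H. clearbody a b.
  assert (Hab : (Re b <= Cmod (a + b))%R).
  { pose proof (re_le_Cmod' (a+b)). simpl in *. unfold Re in *. simpl in *. lra. }
  apply (Rmult_le_reg_r (Re b)); [exact Hb|].
  replace (Cmod (x - x0) / Re b * Re b)%R with (Cmod (x - x0)) by (field; nzr).
  rewrite E, Cmod_mult.
  apply Rmult_le_compat_l; [apply Cmod_ge_0| exact Hab].
Qed.

Definition ccont (f : C -> C) (x : C) : Prop :=
  forall eps : R, (0 < eps)%R -> exists d : R, (0 < d)%R /\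
    forall y, (Cmod (y - x) < d)%R -> (Cmod (f y - f x) < eps)%R.

Lemma ccont_const c x : ccont (fun _ => c) x.
Proof. intros eps He. exists 1%R. split; [lra|]. intros y _.
  replace (c - c) with (RtoC 0) by ring. rewrite Cmod_0. lra. Qed.

Lemma ccont_id x : ccont (fun y => y) x.
Proof. intros eps He. exists eps. split; auto. Qed.

Lemma ccont_plus f g x : ccont f x -> ccont g x -> ccont (fun y => f y + g y) x.
Proof.
  intros Hf Hg eps He.
  destruct (Hf (eps/2)%R) as [d1 [Hd1 H1]]; [lra|].
  destruct (Hg (eps/2)%R) as [d2 [Hd2 H2]]; [lra|].
  exists (Rmin d1 d2). split; [apply Rmin_pos; auto|].
  intros y Hy. assert (Hy1 : (Cmod (y - x) < d1)%R) by (pose proof (Rmin_l d1 d2); lra).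
  assert (Hy2 : (Cmod (y - x) < d2)%R) by (pose proof (Rmin_r d1 d2); lra).
  specialize (H1 y Hy1). specialize (H2 y Hy2).
  replace (f y + g y - (f x + g x)) with ((f y - f x) + (g y - g x)) by ring.
  pose proof (Cmod_triangle (f y - f x) (g y - g x)). lra.
Qed.

Lemma ccont_opp f x : ccont f x -> ccont (fun y => - f y) x.
Proof.
  intros Hf eps He. destruct (Hf eps He) as [d [Hd H]]. exists d. split; auto.
  intros y Hy. replace (- f y - - f x) with (- (f y - f x)) by ring. rewrite Cmod_opp. auto.
Qed.

Lemma ccont_minus f g x : ccont f x -> ccont g x -> ccont (fun y => f y - g y) x.
Proof. intros. apply ccont_plus; auto. apply ccont_opp; auto. Qed.

Lemma ccont_mult f g x : ccont f x -> ccont g x -> ccont (fun y => f y * g y) x.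
Proof.
  intros Hf Hg eps He.
  set (A := Cmod (f x)). set (B := Cmod (g x)).
  assert (HA : (0 <= A)%R) by apply Cmod_ge_0. assert (HB : (0 <= B)%R) by apply Cmod_ge_0.
  set (e := Rmin 1 (eps / (A + B + 1))).
  assert (He0 : (0 < e)%R). { apply Rmin_pos; [lra|]. apply Rdiv_lt_0_compat; lra. }
  assert (He1 : (e <= 1)%R) by apply Rmin_l.
  assert (He2 : (e * (A + B + 1) <= eps)%R).
  { assert (e <= eps / (A+B+1))%R by apply Rmin_r.
    apply (Rmult_le_compat_r (A+B+1)) in H; [|lra].
    unfold Rdiv in H. rewrite Rmult_assoc, Rinv_l in H by nzr. lra. }
  destruct (Hf e He0) as [d1 [Hd1 H1]]. destruct (Hg e He0) as [d2 [Hd2 H2]].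
  exists (Rmin d1 d2). split; [apply Rmin_pos; auto|].
  intros y Hy. assert (Hy1 : (Cmod (y - x) < d1)%R) by (pose proof (Rmin_l d1 d2); lra).
  assert (Hy2 : (Cmod (y - x) < d2)%R) by (pose proof (Rmin_r d1 d2); lra).
  specialize (H1 y Hy1). specialize (H2 y Hy2).
  replace (f y * g y - f x * g x) with ((f y - f x) * (g y - g x) + (f y - f x) * g x + f x * (g y - g x)) by ring.
  eapply Rle_lt_trans. apply Cmod_triangle.
  eapply Rle_lt_trans. apply Rplus_le_compat_r. apply Cmod_triangle.
  rewrite !Cmod_mult. fold A B.
  set (u := Cmod (f y - f x)) in *. set (v := Cmod (g y - g x)) in *.
  assert (0 <= u)%R by apply Cmod_ge_0. assert (0 <= v)%R by apply Cmod_ge_0.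
  assert (u * v <= u)%R by nra.
  assert (u * B <= e * B)%R by (apply Rmult_le_compat_r; lra).
  assert (A * v <= A * e)%R by (apply Rmult_le_compat_l; lra).
  nra.
Qed.

Lemma ccont_inv f x : ccont f x -> f x <> 0 -> ccont (fun y => / f y) x.
Proof.
  intros Hf Hx eps He.
  set (A := Cmod (f x)).
  assert (HA : (0 < A)%R) by (apply Cmod_gt_0; auto).
  set (e := Rmin (A/2) (eps * A * A / 2)).
  assert (He0 : (0 < e)%R). { apply Rmin_pos; [lra|]. apply Rdiv_lt_0_compat; [|lra]. 
    apply Rmult_lt_0_compat; [|lra]. apply Rmult_lt_0_compat; lra. }
  destruct (Hf e He0) as [d [Hd H]]. exists d. split; auto.
  intros y Hy. specialize (H y Hy).
  assert (HeA : (e <= A/2)%R) by apply Rmin_l.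
  assert (Hee : (e <= eps * A * A / 2)%R) by apply Rmin_r.
  assert (Hfy : (A / 2 <= Cmod (f y))%R).
  { pose proof (Cmod_triangle (f y) (f x - f y)).
    replace (f y + (f x - f y)) with (f x) in H0 by ring.
    replace (f x - f y) with (- (f y - f x)) in H0 by ring. rewrite Cmod_opp in H0. fold A in H0. lra. }
  assert (Hy0 : f y <> 0). { intro E. rewrite E, Cmod_0 in Hfy. lra. }
  replace (/ f y - / f x) with (- (f y - f x) * / f y * / f x) by (field; auto).
  rewrite !Cmod_mult, Cmod_opp, !Cmod_inv by auto. fold A.
  set (u := Cmod (f y - f x)) in *. set (w := Cmod (f y)) in *.
  apply Rle_lt_trans with (u * / (A/2) * / A)%R.
  - apply Rmult_le_compat_r. left; apply Rinv_0_lt_compat; lra.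
    apply Rmult_le_compat_l. apply Cmod_ge_0. apply Rinv_le_contravar; lra.
  - apply Rlt_le_trans with (e * / (A/2) * / A)%R.
    + apply Rmult_lt_compat_r. apply Rinv_0_lt_compat; lra.
      apply Rmult_lt_compat_r. apply Rinv_0_lt_compat; lra. auto.
    + replace (e * / (A / 2) * / A)%R with (2 * e / (A * A))%R by (field; repeat split; nzr).
      apply (Rmult_le_reg_r (A*A)). nra. unfold Rdiv. rewrite Rmult_assoc, Rinv_l by nzr. nra.
Qed.

Lemma ccont_comp f g x : ccont f x -> ccont g (f x) -> ccont (fun y => g (f y)) x.
Proof.
  intros Hf Hg eps He. destruct (Hg eps He) as [d1 [Hd1 H1]].
  destruct (Hf d1 Hd1) as [d2 [Hd2 H2]]. exists d2. split; auto.
Qed.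

Lemma ccont_lip f x (K : R) : (exists d, 0 < d /\ forall y, Cmod (y - x) < d -> Cmod (f y - f x) <= K * Cmod (y - x))%R ->
  ccont f x.
Proof.
  intros [d [Hd H]] eps He.
  set (K' := (Rabs K + 1)%R).
  exists (Rmin d (eps / K'))%R. split.
  { apply Rmin_pos; auto. apply Rdiv_lt_0_compat; auto. unfold K'; pose proof (Rabs_pos K); lra. }
  intros y Hy. assert (Hy1 : (Cmod (y - x) < d)%R) by (pose proof (Rmin_l d (eps/K')); lra).
  assert (Hy2 : (Cmod (y - x) < eps/K')%R) by (pose proof (Rmin_r d (eps/K')); lra).
  specialize (H y Hy1).
  assert (HK : (0 < K')%R) by (unfold K'; pose proof (Rabs_pos K); lra).
  assert (K * Cmod (y - x) <= K' * Cmod (y - x))%R.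
  { apply Rmult_le_compat_r. apply Cmod_ge_0. unfold K'. pose proof (Rle_abs K). lra. }
  assert (K' * Cmod (y - x) < eps)%R.
  { apply (Rmult_lt_compat_l K') in Hy2; auto. unfold Rdiv in Hy2.
    rewrite <- Rmult_assoc, (Rmult_comm K' eps), Rmult_assoc, Rinv_r in Hy2 by nzr. lra. }
  lra.
Qed.

Lemma ccont_Csqrt x0 : (0 < Re (Csqrt x0))%R -> ccont Csqrt x0.
Proof.
  intros H. apply ccont_lip with (/ Re (Csqrt x0))%R. exists 1%R. split; [lra|].
  intros y _. eapply Rle_trans. apply Csqrt_lip; auto. unfold Rdiv. rewrite Rmult_comm. lra.
Qed.

Definition hasd (f : C -> C) (x l : C) : Prop :=
  forall eps : R, (0 < eps)%R -> exists d : R, (0 < d)%R /\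
    forall y, (Cmod (y - x) < d)%R -> (Cmod (f y - f x - (y - x) * l) <= eps * Cmod (y - x))%R.

Lemma hasd_is_derive f x l : hasd f x l -> is_derive (K := C_AbsRing) (V := C_NormedModule) f x l.
Proof.
  intros H. unfold is_derive, filterdiff. split.
  - apply is_linear_scal_l.
  - intros x' Hx'. assert (Ex := is_filter_lim_locally_unique (K:=C_AbsRing) (V:=AbsRing_NormedModule C_AbsRing) x x' Hx'). subst x'.
    intros eps. destruct (H eps (cond_pos eps)) as [d [Hd Hy]].
    exists (mkposreal d Hd). intros y Hy'.
    change (Cmod (y - x) < d)%R in Hy'.
    change (Cmod (f y - f x - (y - x) * l) <= eps * Cmod (y - x))%R.
    auto.
Qed.

Lemma is_derive_hasd f x l : is_derive (K := C_AbsRing) (V := C_NormedModule) f x l -> hasd f x l.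
Proof.
  intros [_ H] eps He.
  specialize (H x (fun P HP => HP)).
  specialize (H (mkposreal eps He)).
  destruct H as [d Hd].
  exists d. split; [apply cond_pos|]. intros y Hy.
  specialize (Hd y).
  change (Cmod (y - x) < d -> Cmod (f y - f x - (y - x) * l) <= eps * Cmod (y - x))%R in Hd.
  auto.
Qed.

Lemma hasd_ccont f x l : hasd f x l -> ccont f x.
Proof.
  intros H. apply ccont_lip with (1 + Cmod l)%R.
  destruct (H 1%R ltac:(lra)) as [d [Hd Hy]]. exists d. split; auto.
  intros y Hy1. specialize (Hy y Hy1).
  replace (f y - f x) with ((f y - f x - (y - x) * l) + (y - x) * l) by ring.
  eapply Rle_trans. apply Cmod_triangle. rewrite Cmod_mult. nra.
Qed.

Lemma C_ball_of_Cmod (x y : C) (e : posreal) : (Cmod (y - x) < e)%R -> ball (M := C_UniformSpace) x e y.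
Proof.
  intros H. destruct x as [a b]; destruct y as [c d].
  pose proof (re_le_Cmod ((c, d) - (a, b))). pose proof (im_le_Cmod' ((c, d) - (a, b))).
  split; simpl in *; change (Rabs (c + - a) < e)%R || change (Rabs (d + - b) < e)%R; simpl in *; lra.
Qed.

Lemma Cmod_of_C_ball (x y : C) (e : posreal) : ball (M := C_UniformSpace) x e y -> (Cmod (y - x) < 2 * e)%R.
Proof.
  intros [H1 H2]. destruct x as [a b]; destruct y as [c d].
  change (Rabs (c + - a) < e)%R in H1. change (Rabs (d + - b) < e)%R in H2.
  pose proof (Cmod_le_abs ((c, d) - (a, b))). simpl in *. lra.
Qed.

Lemma ccont_continuous f x : ccont f x -> continuous f x.
Proof.
  intros H P [e He].
  assert (He2 : (0 < e / 2)%R) by (pose proof (cond_pos e); lra).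
  destruct (H (e/2)%R He2) as [d [Hd Hy]].
  assert (Hd2 : (0 < d / 2)%R) by lra.
  exists (mkposreal _ Hd2). intros y Hy'.
  apply Cmod_of_C_ball in Hy'. simpl in Hy'.
  specialize (Hy y ltac:(lra)).
  apply He. apply C_ball_of_Cmod. lra.
Qed.

Lemma hasd_DQ g h K x dh :
  hasd h x dh -> ccont K x ->
  (exists d0, (0 < d0)%R /\ forall y, (Cmod (y - x) < d0)%R -> g y - g x = (h y - h x) * K y) ->
  hasd g x (dh * K x).
Proof.
  intros Hh HK [d0 [Hd0 Hg]] eps He.
  set (A := Cmod (K x)). set (D := Cmod dh).
  assert (HA : (0 <= A)%R) by apply Cmod_ge_0. assert (HD : (0 <= D)%R) by apply Cmod_ge_0.
  set (e1 := (eps / (2 * (A + 1)))%R). set (e2 := Rmin 1 (eps / (2 * (D + 1)))%R).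
  assert (He1 : (0 < e1)%R) by (unfold e1; apply Rdiv_lt_0_compat; lra).
  assert (He2 : (0 < e2)%R) by (unfold e2; apply Rmin_pos; [lra| apply Rdiv_lt_0_compat; lra]).
  assert (He2' : (e2 <= 1)%R) by apply Rmin_l.
  assert (He2'' : (e2 * (D + 1) <= eps / 2)%R).
  { assert (e2 <= eps / (2 * (D + 1)))%R by apply Rmin_r.
    apply (Rmult_le_compat_r (D+1)) in H; [|lra].
    replace (eps / (2 * (D + 1)) * (D + 1))%R with (eps/2)%R in H by (field; nzr). lra. }
  assert (He1' : (e1 * (A + 1) = eps / 2)%R) by (unfold e1; field; nzr).
  destruct (Hh e1 He1) as [d1 [Hd1 H1]].
  destruct (HK e2 He2) as [d2 [Hd2 H2]].
  exists (Rmin d0 (Rmin d1 d2)). split. { apply Rmin_pos; auto. apply Rmin_pos; auto. }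
  intros y Hy.
  assert (Hy0 : (Cmod (y - x) < d0)%R) by (pose proof (Rmin_l d0 (Rmin d1 d2)); lra).
  assert (Hy1 : (Cmod (y - x) < d1)%R) by (pose proof (Rmin_r d0 (Rmin d1 d2)); pose proof (Rmin_l d1 d2); lra).
  assert (Hy2 : (Cmod (y - x) < d2)%R) by (pose proof (Rmin_r d0 (Rmin d1 d2)); pose proof (Rmin_r d1 d2); lra).
  rewrite (Hg y Hy0).
  specialize (H1 y Hy1). specialize (H2 y Hy2).
  replace ((h y - h x) * K y - (y - x) * (dh * K x)) with
    ((h y - h x - (y - x) * dh) * K y + (y - x) * dh * (K y - K x)) by ring.
  eapply Rle_trans. apply Cmod_triangle. rewrite !Cmod_mult. fold D.
  assert (HKy : (Cmod (K y) <= A + 1)%R).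
  { replace (K y) with (K x + (K y - K x)) by ring. eapply Rle_trans. apply Cmod_triangle. fold A. lra. }
  set (u := Cmod (y - x)) in *.
  assert (0 <= u)%R by apply Cmod_ge_0.
  set (w := Cmod (h y - h x - (y - x) * dh)) in *.
  assert (0 <= w)%R by apply Cmod_ge_0.
  assert (w * Cmod (K y) <= e1 * u * (A + 1))%R.
  { apply Rmult_le_compat; auto. apply Cmod_ge_0. }
  assert (u * D * Cmod (K y - K x) <= u * D * e2)%R.
  { apply Rmult_le_compat_l. nra. lra. }
  assert (u * D * e2 <= u * (eps/2))%R. { nra. }
  nra.
Qed.

Lemma hasd_id x : hasd (fun y => y) x 1.
Proof. intros eps He. exists 1%R. split; [lra|]. intros y _.
  replace (y - x - (y - x) * 1) with (RtoC 0) by ring. rewrite Cmod_0.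
  pose proof (Cmod_ge_0 (y - x)). nra. Qed.

Lemma hasd_const c x : hasd (fun _ => c) x 0.
Proof. intros eps He. exists 1%R. split; [lra|]. intros y _.
  replace (c - c - (y - x) * 0) with (RtoC 0) by ring. rewrite Cmod_0.
  pose proof (Cmod_ge_0 (y - x)). nra. Qed.

Lemma hasd_ext f g x l : (exists d, (0 < d)%R /\ forall y, (Cmod (y - x) < d)%R -> f y = g y) ->
  hasd f x l -> hasd g x l.
Proof.
  intros [d [Hd E]] H eps He. destruct (H eps He) as [d1 [Hd1 H1]].
  assert (Ex : f x = g x). { apply E. replace (x - x) with (RtoC 0) by ring. rewrite Cmod_0. auto. }
  exists (Rmin d d1). split; [apply Rmin_pos; auto|]. intros y Hy.
  rewrite <- E, <- Ex. apply H1. pose proof (Rmin_r d d1); lra. pose proof (Rmin_l d d1); lra.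
Qed.

Definition hol (f : C -> C) (x : C) : Prop := exists l, hasd f x l.

Lemma hol_ex_derive f x : hol f x -> ex_derive (K := C_AbsRing) (V := C_NormedModule) f x.
Proof. intros [l H]. exists l. apply hasd_is_derive; auto. Qed.

Lemma ex_derive_hol f x : ex_derive (K := C_AbsRing) (V := C_NormedModule) f x -> hol f x.
Proof. intros [l H]. exists l. apply is_derive_hasd; auto. Qed.

Lemma hol_ccont f x : hol f x -> ccont f x.
Proof. intros [l H]; eapply hasd_ccont; eauto. Qed.

Lemma hol_DQ g h K x :
  hol h x -> ccont K x ->
  (exists d0, (0 < d0)%R /\ forall y, (Cmod (y - x) < d0)%R -> g y - g x = (h y - h x) * K y) ->
  hol g x.
Proof. intros [l H] HK HE. eexists. eapply hasd_DQ; eauto. Qed.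

Lemma hol_id x : hol (fun y => y) x.
Proof. eexists; apply hasd_id. Qed.

Lemma hol_const c x : hol (fun _ => c) x.
Proof. eexists; apply hasd_const. Qed.

Lemma hol_ext f g x : (exists d, (0 < d)%R /\ forall y, (Cmod (y - x) < d)%R -> f y = g y) ->
  hol f x -> hol g x.
Proof. intros E [l H]. exists l. eapply hasd_ext; eauto. Qed.

Lemma hasd_plus f g x a b : hasd f x a -> hasd g x b -> hasd (fun y => f y + g y) x (a + b).
Proof.
  intros Hf Hg eps He.
  destruct (Hf (eps/2)%R ltac:(lra)) as [d1 [Hd1 H1]].
  destruct (Hg (eps/2)%R ltac:(lra)) as [d2 [Hd2 H2]].
  exists (Rmin d1 d2). split; [apply Rmin_pos; auto|].
  intros y Hy. assert (Hy1 : (Cmod (y - x) < d1)%R) by (pose proof (Rmin_l d1 d2); lra).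
  assert (Hy2 : (Cmod (y - x) < d2)%R) by (pose proof (Rmin_r d1 d2); lra).
  specialize (H1 y Hy1). specialize (H2 y Hy2).
  replace (f y + g y - (f x + g x) - (y - x) * (a + b)) with
    ((f y - f x - (y - x) * a) + (g y - g x - (y - x) * b)) by ring.
  eapply Rle_trans. apply Cmod_triangle. lra.
Qed.

Lemma hol_plus f g x : hol f x -> hol g x -> hol (fun y => f y + g y) x.
Proof. intros [a Ha] [b Hb]. eexists. apply hasd_plus; eauto. Qed.

Lemma hol_scal c f x : hol f x -> hol (fun y => c * f y) x.
Proof.
  intros Hf. apply hol_DQ with f (fun _ => c); auto. apply ccont_const.
  exists 1%R. split; [lra|]. intros; ring.
Qed.

Lemma hol_opp f x : hol f x -> hol (fun y => - f y) x.
Proof.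
  intros H. apply hol_ext with (fun y => (-1) * f y). exists 1%R; split; [lra|]; intros; ring.
  apply hol_scal; auto.
Qed.

Lemma hol_minus f g x : hol f x -> hol g x -> hol (fun y => f y - g y) x.
Proof. intros. apply hol_plus; auto. apply hol_opp; auto. Qed.

Lemma hol_sq f x : hol f x -> hol (fun y => f y * f y) x.
Proof.
  intros Hf. apply hol_DQ with f (fun y => f y + f x); auto.
  apply ccont_plus. apply hol_ccont; auto. apply ccont_const.
  exists 1%R. split; [lra|]. intros; ring.
Qed.

Lemma hol_mult f g x : hol f x -> hol g x -> hol (fun y => f y * g y) x.
Proof.
  intros Hf Hg.
  apply hol_ext with (fun y => /4 * ((f y + g y) * (f y + g y)) + (- /4) * ((f y - g y) * (f y - g y))).
  { exists 1%R; split; [lra|]. intros. field. }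
  apply hol_plus; apply hol_scal; apply hol_sq; [apply hol_plus|apply hol_minus]; auto.
Qed.

Lemma ccont_ne0 f x : ccont f x -> f x <> 0 ->
  exists d, (0 < d)%R /\ forall y, (Cmod (y - x) < d)%R -> f y <> 0.
Proof.
  intros H Hx. assert (HA : (0 < Cmod (f x))%R) by (apply Cmod_gt_0; auto).
  destruct (H (Cmod (f x)) HA) as [d [Hd Hy]]. exists d. split; auto.
  intros y Hy1 E. specialize (Hy y Hy1). rewrite E in Hy.
  replace (0 - f x) with (- f x) in Hy by ring. rewrite Cmod_opp in Hy. lra.
Qed.

Lemma hol_inv f x : hol f x -> f x <> 0 -> hol (fun y => / f y) x.
Proof.
  intros Hf Hx. assert (Hc := hol_ccont f x Hf).
  apply hol_DQ with f (fun y => - / (f y * f x)); auto.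
  - apply ccont_opp. apply ccont_inv. apply ccont_mult; auto. apply ccont_const.
    intro E. apply Cmult_integral in E. tauto.
  - destruct (ccont_ne0 f x Hc Hx) as [d [Hd Hy]]. exists d. split; auto.
    intros y Hy1. specialize (Hy y Hy1). field. split; auto.
Qed.

Lemma hol_div f g x : hol f x -> hol g x -> g x <> 0 -> hol (fun y => f y / g y) x.
Proof. intros. apply hol_mult; auto. apply hol_inv; auto. Qed.

Definition dP (z w : C) : C := 3 * w * w - 2 * (z + 1) * w + z.
Definition Mdd (z x y : C) : C := x * x + x * y + y * y - (z + 1) * (x + y) + z.

Lemma Pz_diff z x y : Pz z x - Pz z y = (x - y) * Mdd z x y.
Proof. unfold Pz, Mdd. ring. Qed.

Lemma Mdd_diag z x : Mdd z x x = dP z x.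
Proof. unfold Mdd, dP. ring. Qed.

Definition cparams (z m : C) (rho cl b : R) : Prop :=
  (0 < rho)%R /\ (0 < cl)%R /\ (cl <= Cmod (dP z m))%R /\ (Cmod (3 * m - z - 1) <= b)%R /\
  (2 * b * rho + 3 * rho * rho <= cl / 2)%R.

Section Contr.
Variables (z m : C) (rho cl b : R).
Hypothesis HP : cparams z m rho cl b.

Lemma M_bound x y : (Cmod (x - m) <= rho)%R -> (Cmod (y - m) <= rho)%R ->
  (Cmod (Mdd z x y - dP z m) <= cl / 2)%R.
Proof.
  destruct HP as [Hr [Hc [Hcl [Hb Hs]]]]. intros Hx Hy.
  set (u := x - m). set (v := y - m).
  replace (Mdd z x y - dP z m) with ((3 * m - z - 1) * (u + v) + (u * u + u * v + v * v))
    by (unfold u, v, Mdd, dP; ring).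
  fold u v in Hx, Hy.
  assert (Hu := Cmod_ge_0 u). assert (Hv := Cmod_ge_0 v).
  assert (H0b : (0 <= b)%R) by (pose proof (Cmod_ge_0 (3 * m - z - 1)); lra).
  eapply Rle_trans. apply Cmod_triangle. rewrite Cmod_mult.
  assert (H1 : (Cmod (u + v) <= 2 * rho)%R) by (pose proof (Cmod_triangle u v); lra).
  assert (H2 : (Cmod (u * u + u * v + v * v) <= 3 * rho * rho)%R).
  { eapply Rle_trans. apply Cmod_triangle. eapply Rle_trans. apply Rplus_le_compat_r. apply Cmod_triangle.
    rewrite !Cmod_mult. nra. }
  assert (Cmod (3 * m - z - 1) * Cmod (u + v) <= b * (2 * rho))%R.
  { apply Rmult_le_compat; auto; apply Cmod_ge_0. }
  lra.
Qed.

Lemma M_lower x y : (Cmod (x - m) <= rho)%R -> (Cmod (y - m) <= rho)%R ->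
  (cl / 2 <= Cmod (Mdd z x y))%R.
Proof.
  intros Hx Hy. pose proof (M_bound x y Hx Hy).
  destruct HP as [Hr [Hc [Hcl _]]].
  pose proof (Cmod_triangle (Mdd z x y) (- (Mdd z x y - dP z m))).
  replace (Mdd z x y + - (Mdd z x y - dP z m)) with (dP z m) in H0 by ring.
  rewrite Cmod_opp in H0. lra.
Qed.

Lemma Mdd_ne0 x y : (Cmod (x - m) <= rho)%R -> (Cmod (y - m) <= rho)%R -> Mdd z x y <> 0.
Proof.
  intros Hx Hy E. pose proof (M_lower x y Hx Hy). rewrite E, Cmod_0 in H.
  destruct HP as [_ [Hc _]]. lra.
Qed.

Lemma root_unique x y : (Cmod (x - m) <= rho)%R -> (Cmod (y - m) <= rho)%R ->
  Pz z x = Pz z y -> x = y.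
Proof.
  intros Hx Hy E. assert (E2 : (x - y) * Mdd z x y = 0) by (rewrite <- Pz_diff, E; ring).
  apply Cmult_integral in E2. destruct E2 as [E2|E2].
  - replace x with (x - y + y) by ring. rewrite E2. ring.
  - exfalso. exact (Mdd_ne0 x y Hx Hy E2).
Qed.

Lemma root_lip x y : (Cmod (x - m) <= rho)%R -> (Cmod (y - m) <= rho)%R ->
  (Cmod (x - y) <= 2 / cl * Cmod (Pz z x - Pz z y))%R.
Proof.
  intros Hx Hy. rewrite Pz_diff, Cmod_mult.
  pose proof (M_lower x y Hx Hy). destruct HP as [_ [Hc _]].
  assert (Hm := Cmod_ge_0 (x - y)).
  apply Rle_trans with (2 / cl * (Cmod (x - y) * (cl / 2)))%R.
  - right. field. nzr.
  - apply Rmult_le_compat_l. apply Rlt_le, Rdiv_lt_0_compat; lra.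
    apply Rmult_le_compat_l; auto.
Qed.

Lemma root_exists Q : (Cmod (Pz z m - Q) <= cl * rho / 2)%R ->
  exists w, (Cmod (w - m) <= rho)%R /\ Pz z w = Q.
Proof.
  intros HQ. destruct HP as [Hr [Hc [Hcl [Hb Hs]]]].
  set (c := dP z m).
  assert (Hcl' : (cl <= Cmod c)%R) by exact Hcl.
  assert (Hc0 : c <> 0). { intro E. assert (Cmod c = 0%R) by (rewrite E; apply Cmod_0). lra. }
  assert (Hcm : (0 < Cmod c)%R) by (apply Cmod_gt_0; auto).
  set (T := fun w => w - (Pz z w - Q) / c).
  assert (HT : forall w w', (Cmod (w - m) <= rho)%R -> (Cmod (w' - m) <= rho)%R ->
             (Cmod (T w - T w') <= / 2 * Cmod (w - w'))%R).
  { intros w w' Hw Hw'. unfold T.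
    replace (w - (Pz z w - Q) / c - (w' - (Pz z w' - Q) / c)) with
      ((w - w') * ((c - Mdd z w w') / c)).
    2:{ replace (w - (Pz z w - Q) / c - (w' - (Pz z w' - Q) / c)) with
          ((w - w') - (Pz z w - Pz z w') / c) by (field; auto).
        rewrite Pz_diff. field; auto. }
    rewrite Cmod_mult, Cmod_div by auto.
    replace (c - Mdd z w w') with (- (Mdd z w w' - dP z m)) by (unfold c; ring).
    rewrite Cmod_opp. pose proof (M_bound w w' Hw Hw').
    assert (Hww := Cmod_ge_0 (w - w')).
    assert (Cmod (Mdd z w w' - dP z m) / Cmod c <= / 2)%R.
    { apply (Rmult_le_reg_r (Cmod c)); auto. unfold Rdiv. rewrite Rmult_assoc, Rinv_l by nzr. lra. }
    nra. }
  assert (HT0 : (Cmod (T m - m) <= rho / 2)%R).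
  { unfold T. replace (m - (Pz z m - Q) / c - m) with (- ((Pz z m - Q) / c)) by ring.
    rewrite Cmod_opp, Cmod_div by auto.
    apply (Rmult_le_reg_r (Cmod c)); auto. unfold Rdiv at 1. rewrite Rmult_assoc, Rinv_l by nzr.
    nra. }
  assert (Hself : forall w, (Cmod (w - m) <= rho)%R -> (Cmod (T w - m) <= rho)%R).
  { intros w Hw. replace (T w - m) with ((T w - T m) + (T m - m)) by ring.
    eapply Rle_trans. apply Cmod_triangle.
    assert (Hm0 : (Cmod (m - m) <= rho)%R) by (replace (m - m) with (RtoC 0) by ring; rewrite Cmod_0; lra).
    pose proof (HT w m Hw Hm0). lra. }
  set (x := fun n : nat => Nat.iter n T m).
  assert (Hxs : forall n, x (S n) = T (x n)) by reflexivity.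
  assert (Hin : forall n, (Cmod (x n - m) <= rho)%R).
  { induction n. simpl. replace (m - m) with (RtoC 0) by ring. rewrite Cmod_0. lra.
    rewrite Hxs. apply Hself; auto. }
  assert (Hstep : forall n, (Cmod (x (S n) - x n) <= rho / 2 * (/ 2) ^ n)%R).
  { induction n. simpl. rewrite Rmult_1_r. exact HT0.
    rewrite (Hxs (S n)), (Hxs n).
    eapply Rle_trans; [apply HT; [rewrite <- (Hxs n); apply Hin | apply Hin] |].
    rewrite <- (Hxs n). simpl.
    replace (rho / 2 * (/ 2 * (/ 2) ^ n))%R with (/2 * (rho / 2 * (/ 2) ^ n))%R by ring.
    apply Rmult_le_compat_l; [lra|exact IHn]. }
  assert (Hcauchy : forall k n, (Cmod (x (n + k)%nat - x n) <= rho * (/ 2) ^ n * (1 - (/2) ^ k))%R).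
  { induction k; intros n.
    - rewrite Nat.add_0_r. replace (x n - x n) with (RtoC 0) by ring. rewrite Cmod_0. simpl. lra.
    - replace (n + S k)%nat with (S (n + k)) by lia.
      replace (x (S (n + k)) - x n) with ((x (S (n + k)) - x (n + k)%nat) + (x (n + k)%nat - x n)) by ring.
      eapply Rle_trans. apply Cmod_triangle.
      pose proof (Hstep (n + k)%nat). pose proof (IHk n).
      rewrite pow_add in H. change ((/2) ^ (S k))%R with (/2 * (/2) ^ k)%R. lra. }
  assert (Hc2 : forall n p, (n <= p)%nat -> (Cmod (x p - x n) <= rho * (/ 2) ^ n)%R).
  { intros n p Hnp. replace p with (n + (p - n))%nat by lia.
    eapply Rle_trans. apply Hcauchy.
    assert (0 < (/2) ^ (p - n))%R by (apply pow_lt; lra).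
    assert (0 < (/2) ^ n)%R by (apply pow_lt; lra).
    assert (0 <= rho * (/2)^n * (/2)^(p-n))%R by (repeat apply Rmult_le_pos; lra). lra. }
  assert (Hsmall : forall eps, (0 < eps)%R -> exists N, forall n, (n >= N)%nat -> (rho * (/ 2) ^ n < eps)%R).
  { intros eps He. destruct (pow_lt_1_zero (/ 2) ltac:(rewrite Rabs_right; lra) (eps / rho)) as [N HN].
    apply Rdiv_lt_0_compat; auto. exists N. intros n Hn. specialize (HN n Hn).
    rewrite Rabs_right in HN by (left; apply pow_lt; lra).
    apply (Rmult_lt_compat_l rho) in HN; auto. replace (rho * (eps / rho))%R with eps in HN by (field; nzr). lra. }
  assert (Hcomp : forall (f : C -> R), (forall u, (Rabs (f u) <= Cmod u)%R) ->
            (forall u v, f (u - v) = (f u - f v)%R) ->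
            Cauchy_crit (fun n => f (x n))).
  { intros f Hf Hfl eps He. destruct (Hsmall eps He) as [N HN]. exists N. intros n p Hn Hp.
    unfold Rdist. rewrite <- Hfl.
    destruct (Nat.le_ge_cases n p) as [Hnp|Hnp].
    - rewrite <- Rabs_Ropp. replace (Ropp (f (x n - x p))) with (f (x p - x n)).
      2:{ rewrite !Hfl. ring. }
      eapply Rle_lt_trans. apply Hf. eapply Rle_lt_trans. apply Hc2; auto. apply HN; auto.
    - eapply Rle_lt_trans. apply Hf. eapply Rle_lt_trans. apply Hc2; auto. apply HN; auto. }
  destruct (Rcomplete.R_complete (fun n => Re (x n))) as [lr Hlr].
  { apply Hcomp. apply re_le_Cmod. intros; reflexivity. }
  destruct (Rcomplete.R_complete (fun n => Im (x n))) as [li Hli].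
  { apply Hcomp. apply im_le_Cmod'. intros; reflexivity. }
  set (w := (lr, li) : C).
  assert (Hconv : forall eps, (0 < eps)%R -> exists N, forall n, (n >= N)%nat -> (Cmod (x n - w) < eps)%R).
  { intros eps He. destruct (Hlr (eps/2)%R ltac:(lra)) as [N1 H1]. destruct (Hli (eps/2)%R ltac:(lra)) as [N2 H2].
    exists (max N1 N2). intros n Hn. specialize (H1 n ltac:(lia)). specialize (H2 n ltac:(lia)).
    unfold Rdist in *. eapply Rle_lt_trans. apply Cmod_le_abs. simpl. unfold Re, Im, Rminus in *. lra. }
  assert (Hw : (Cmod (w - m) <= rho)%R).
  { apply Rle_plus_epsilon. intros eps He. destruct (Hconv eps He) as [N HN].
    specialize (HN N (le_n N)).
    replace (w - m) with ((x N - m) - (x N - w)) by ring.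
    eapply Rle_trans. apply Cmod_triangle. rewrite Cmod_opp. pose proof (Hin N). lra. }
  assert (Hfix : T w = w).
  { assert (Cmod (T w - w) <= 0)%R.
    { apply Rle_plus_epsilon. intros eps He. destruct (Hconv (eps/2)%R ltac:(lra)) as [N HN].
      replace (T w - w) with ((T w - T (x N)) + (x (S N) - w)) by (rewrite Hxs; ring).
      eapply Rle_trans. apply Cmod_triangle.
      pose proof (HT w (x N) Hw (Hin N)).
      replace (w - x N) with (- (x N - w)) in H by ring. rewrite Cmod_opp in H.
      pose proof (HN N (le_n N)). pose proof (HN (S N) ltac:(lia)). lra. }
    assert (E0 : T w - w = 0) by (apply Cmod_eq_0; pose proof (Cmod_ge_0 (T w - w)); lra).
    replace (T w) with (T w - w + w) by ring. rewrite E0. ring. }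
  exists w. split; auto.
  unfold T in Hfix.
  assert (E1 : (Pz z w - Q) / c = 0).
  { replace ((Pz z w - Q) / c) with (w - (w - (Pz z w - Q) / c)) by ring. rewrite Hfix. ring. }
  assert (E2 : Pz z w - Q = 0).
  { replace (Pz z w - Q) with ((Pz z w - Q) / c * c) by (field; auto). rewrite E1. ring. }
  replace (Pz z w) with (Pz z w - Q + Q) by ring. rewrite E2. ring.
Qed.
End Contr.

Definition croot (z m : C) (rho : R) (Q : C) : C :=
  epsilon (inhabits m) (fun w => (Cmod (w - m) <= rho)%R /\ Pz z w = Q).

Lemma croot_spec z m rho cl b Q : cparams z m rho cl b -> (Cmod (Pz z m - Q) <= cl * rho / 2)%R ->
  (Cmod (croot z m rho Q - m) <= rho)%R /\ Pz z (croot z m rho Q) = Q.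
Proof.
  intros HP HQ. unfold croot. apply epsilon_spec. apply (root_exists z m rho cl b HP Q HQ).
Qed.

Ltac cc := repeat first [ apply ccont_plus | apply ccont_minus | apply ccont_mult | apply ccont_opp
                        | apply ccont_const | apply ccont_id | assumption ].
Ltac hh := repeat first [ apply hol_plus | apply hol_minus | apply hol_mult | apply hol_opp
                        | apply hol_const | apply hol_id | assumption ].

Lemma ccont_Mdd z g c x : ccont g x -> ccont (fun y => Mdd z (g y) c) x.
Proof. intros H. unfold Mdd. cc. Qed.

Lemma ccont_dP z g x : ccont g x -> ccont (fun y => dP z (g y)) x.
Proof. intros H. unfold dP. cc. Qed.

Lemma hol_dP z g x : hol g x -> hol (fun y => dP z (g y)) x.
Proof. intros H. unfold dP. hh. Qed.

Lemma hol_Mdd z g c x : hol g x -> hol (fun y => Mdd z (g y) c) x.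
Proof. intros H. unfold Mdd. hh. Qed.

Lemma root_hol z g x : ccont g x ->
  (exists d, (0 < d)%R /\ forall y, (Cmod (y - x) < d)%R -> Pz z (g y) = y) ->
  dP z (g x) <> 0 -> hol g x.
Proof.
  intros Hc [d [Hd HPy]] Hne.
  apply hol_DQ with (fun y => y) (fun y => / Mdd z (g y) (g x)).
  - apply hol_id.
  - apply ccont_inv. apply ccont_Mdd; auto. rewrite Mdd_diag; auto.
  - exists d. split; auto. intros y Hy.
    assert (E : (g y - g x) * Mdd z (g y) (g x) = y - x).
    { rewrite <- Pz_diff. rewrite (HPy y Hy). rewrite (HPy x). reflexivity.
      replace (x - x) with (RtoC 0) by ring. rewrite Cmod_0. auto. }
    destruct (Ceq_dec (Mdd z (g y) (g x)) 0) as [E0|E0].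
    + rewrite E0, Cmult_0_r in E. assert (y = x).
      { replace y with (y - x + x) by ring. rewrite <- E. ring. }
      subst y. ring.
    + rewrite <- E. field. auto.
Qed.

Lemma sqrt_hol k h x : ccont k x -> (exists d, (0 < d)%R /\ forall y, (Cmod (y - x) < d)%R -> k y * k y = h y) ->
  k x <> 0 -> hol h x -> hol k x.
Proof.
  intros Hc [d [Hd Hy]] Hne Hh.
  assert (Hc2 : ccont (fun y => k y + k x) x) by cc.
  assert (Hn2 : k x + k x <> 0).
  { replace (k x + k x) with (2 * k x) by ring. apply Cmult_neq_0; auto.
    intro E. injection E. lra. }
  apply hol_DQ with h (fun y => / (k y + k x)); auto.
  - apply ccont_inv; auto.
  - destruct (ccont_ne0 _ x Hc2 Hn2) as [d2 [Hd2 H2]].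
    exists (Rmin d d2). split; [apply Rmin_pos; auto|]. intros y Hy1.
    assert (Ha : (Cmod (y - x) < d)%R) by (pose proof (Rmin_l d d2); lra).
    assert (Hb : (Cmod (y - x) < d2)%R) by (pose proof (Rmin_r d d2); lra).
    rewrite <- (Hy y Ha), <- (Hy x). field. apply H2; auto.
    replace (x - x) with (RtoC 0) by ring. rewrite Cmod_0. auto.
Qed.

Lemma three_roots z a b c : Pz z a = Pz z b -> Pz z c = Pz z b -> a <> b -> c <> b -> a <> c ->
  (b - a) * (b - c) = dP z b.
Proof.
  intros Hab Hcb nab ncb nac.
  assert (M1 : Mdd z a b = 0).
  { assert (E : (a - b) * Mdd z a b = 0) by (rewrite <- Pz_diff, Hab; ring).
    apply Cmult_integral in E. destruct E as [E|E]; auto. exfalso. apply nab.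
    replace a with (a - b + b) by ring. rewrite E. ring. }
  assert (M2 : Mdd z c b = 0).
  { assert (E : (c - b) * Mdd z c b = 0) by (rewrite <- Pz_diff, Hcb; ring).
    apply Cmult_integral in E. destruct E as [E|E]; auto. exfalso. apply ncb.
    replace c with (c - b + b) by ring. rewrite E. ring. }
  assert (S : c = z + 1 - a - b).
  { assert (E : (a - c) * (a + c + b - (z + 1)) = 0).
    { replace ((a - c) * (a + c + b - (z + 1))) with (Mdd z a b - Mdd z c b) by (unfold Mdd; ring).
      rewrite M1, M2. ring. }
    apply Cmult_integral in E. destruct E as [E|E].
    - exfalso. apply nac. replace a with (a - c + c) by ring. rewrite E. ring.
    - replace c with (a + c + b - (z + 1) + (z + 1 - a - b)) by ring. rewrite E. ring. }
  subst c. replace (dP z b) with ((b - a) * (b - (z + 1 - a - b)) + Mdd z a b) by (unfold dP, Mdd; ring).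
  rewrite M1. ring.
Qed.

Lemma Cmod_scal_R (t : R) (a : C) : Cmod (RtoC t * a) = (Rabs t * Cmod a)%R.
Proof. rewrite Cmod_mult, Cmod_R. reflexivity. Qed.

Lemma disc_convex c r : Cconvex (Cdisc c r).
Proof.
  intros x y t Hx Hy Ht. unfold Cdisc in *.
  replace (x + RtoC t * (y - x) - c) with (RtoC (1 - t) * (x - c) + RtoC t * (y - c)).
  2:{ unfold RtoC. apply injective_projections; simpl; ring. }
  eapply Rle_lt_trans. apply Cmod_triangle. rewrite !Cmod_scal_R.
  rewrite !Rabs_right by lra.
  destruct (Req_dec t 0). subst. lra. nra.
Qed.

Lemma disc_open c r : Copen (Cdisc c r).
Proof.
  intros x Hx. unfold Cdisc in *. exists (r - Cmod (x - c))%R. split; [lra|].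
  intros y Hy. replace (y - c) with ((y - x) + (x - c)) by ring.
  eapply Rle_lt_trans. apply Cmod_triangle. lra.
Qed.

Lemma Cinv_ne0 (a : C) : a <> 0 -> / a <> 0.
Proof. intros H E. assert (H0 := Cinv_r a H). rewrite E, Cmult_0_r in H0.
  apply (f_equal fst) in H0; simpl in H0; lra. Qed.

Definition dlt : R := (1/10000)%R.
Definition q0 : R := (sqrt 3 / 2)%R.
Definition m1 : R := (417/400)%R.
Definition m0 : R := (-17/400)%R.
Definition rh : R := (43/500)%R.
Definition cl : R := (63/100)%R.
Definition bb : R := (163/100)%R.

Lemma q0_bounds : (866/1000 <= q0 <= 86605/100000)%R.
Proof.
  unfold q0. assert (H0 := sqrt_pos 3). assert (H1 := sqrt_sqrt 3 ltac:(lra)).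
  split; nra.
Qed.

Lemma zb z : Cdisc (RtoC (1/2)) dlt z -> (Rabs (Re z - 1/2) < dlt /\ Rabs (Im z) < dlt)%R.
Proof.
  unfold Cdisc. intros H. pose proof (re_le_Cmod (z - RtoC (1/2))). pose proof (im_le_Cmod' (z - RtoC (1/2))).
  destruct z as [zr zi]. simpl in *. unfold Rminus. split.
  - replace (zr + - (1/2))%R with (zr + - (1/2) )%R by ring. lra.
  - replace (zi + - 0)%R with zi in * by ring. lra.
Qed.

Lemma cparams_m z (m : R) : (Rabs (Re z - 1/2) < dlt /\ Rabs (Im z) < dlt)%R ->
  (m = m1 \/ m = m0) -> cparams z (RtoC m) rh cl bb.
Proof.
  intros [Hr Hi] Hm. unfold dlt in *. destruct z as [zr zi]. simpl in Hr, Hi.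
  apply Rabs_def2 in Hr. apply Rabs_def2 in Hi.
  unfold cparams, rh, cl, bb. split; [lra|]. split; [lra|]. split.
  - eapply Rle_trans; [|apply re_le_Cmod']. unfold dP. simpl.
    destruct Hm; subst; unfold m1, m0; nra.
  - split; [|lra].
    eapply Rle_trans; [apply Cmod_le_abs|]. simpl.
    destruct Hm; subst; unfold m1, m0;
    unfold Rabs; repeat destruct Rcase_abs; lra.
Qed.

Definition qz (z : C) : C := Csqrt (z * z - z + 1).

Lemma qz_sq z : qz z * qz z = z * z - z + 1.
Proof. apply Csqrt_sq. Qed.

Lemma q0_sq : RtoC q0 * RtoC q0 = RtoC (3/4).
Proof. rewrite <- RtoC_mult. f_equal. unfold q0.
  replace (sqrt 3 / 2 * (sqrt 3 / 2))%R with (sqrt 3 * sqrt 3 / 4)%R by field.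
  rewrite sqrt_sqrt by lra. field. Qed.

Lemma Cmod_RtoC_pos (r : R) : (0 <= r)%R -> Cmod (RtoC r) = r.
Proof. intros. rewrite Cmod_R, Rabs_right; lra. Qed.

Lemma Cmod_sub_le (a b : C) : (Cmod (a - b) <= Cmod a + Cmod b)%R.
Proof. eapply Rle_trans. apply Cmod_triangle. rewrite Cmod_opp. lra. Qed.

Lemma RtoC_ne0 (r : R) : r <> 0%R -> RtoC r <> 0.
Proof. intros H E. apply H. apply (f_equal fst) in E. exact E. Qed.

Lemma RtoC_half : RtoC (1/2) = / 2.
Proof. unfold RtoC, Cinv. simpl. apply injective_projections; simpl; field. Qed.

Section ZB.
Variable z : C.
Hypothesis Hz : (Cmod (z - RtoC (1/2)) < dlt)%R.

Let e := z - RtoC (1/2).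
Let q := qz z.

Lemma qz_close : (Cmod (q - RtoC q0) <= 2 * dlt * dlt)%R.
Proof.
  pose proof q0_bounds as Hq0.
  assert (E : (q - RtoC q0) * (q + RtoC q0) = e * e).
  { replace ((q - RtoC q0) * (q + RtoC q0)) with (q * q - RtoC q0 * RtoC q0) by ring.
    unfold q. rewrite qz_sq, q0_sq. unfold e.
    unfold RtoC. apply injective_projections; simpl; field. }
  assert (Hre : (q0 <= Cmod (q + RtoC q0))%R).
  { eapply Rle_trans; [|apply re_le_Cmod']. assert (Hq : (0 <= Re q)%R) by apply Csqrt_re_ge0.
    replace (Re (q + RtoC q0)) with (Re q + q0)%R by (unfold Re; simpl; ring). lra. }
  assert (Hm : (Cmod (q - RtoC q0) * Cmod (q + RtoC q0) <= dlt * dlt)%R).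
  { rewrite <- Cmod_mult, E, Cmod_mult. fold e in Hz. pose proof (Cmod_ge_0 e). nra. }
  assert (H0 := Cmod_ge_0 (q - RtoC q0)).
  unfold dlt in *. nra.
Qed.

Lemma Qplus_formula : RtoC 27 * Q_plus z =
  - (z - 2) * (2 * z - 1) * (z + 1) - 2 * q * (z * z - z + 1).
Proof.
  assert (H : RtoC 27 * Q_plus z = - (z - 2) * (2 * z - 1) * (z + 1) - 2 * q * (z * z - z + 1)
                 + q * (q * q - (z * z - z + 1))).
  { unfold Q_plus, w_plus, Pz, q, qz. field. }
  rewrite H. unfold q. rewrite qz_sq. ring.
Qed.

Lemma Qminus_formula : RtoC 27 * Q_minus z =
  - (z - 2) * (2 * z - 1) * (z + 1) + 2 * q * (z * z - z + 1).
Proof.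
  assert (H : RtoC 27 * Q_minus z = - (z - 2) * (2 * z - 1) * (z + 1) + 2 * q * (z * z - z + 1)
                 - q * (q * q - (z * z - z + 1))).
  { unfold Q_minus, w_minus, Pz, q, qz. field. }
  rewrite H. unfold q. rewrite qz_sq. ring.
Qed.

Lemma Qm_identity : RtoC 27 * (Q_minus z - RtoC q0 / 18) =
  - (2 * e) * (e * e - 9 / 4) + 2 * (q - RtoC q0) * (e * e + 3 / 4) + 2 * RtoC q0 * (e * e).
Proof.
  transitivity (RtoC 27 * Q_minus z - RtoC 27 * (RtoC q0 / 18)); [ring|].
  rewrite Qminus_formula. unfold e. rewrite RtoC_half. field.
  all: try (apply RtoC_ne0; lra).
Qed.

Lemma Qp_identity : RtoC 27 * (Q_plus z + RtoC q0 / 18) =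
  - (2 * e) * (e * e - 9 / 4) - 2 * (q - RtoC q0) * (e * e + 3 / 4) - 2 * RtoC q0 * (e * e).
Proof.
  transitivity (RtoC 27 * Q_plus z + RtoC 27 * (RtoC q0 / 18)); [ring|].
  rewrite Qplus_formula. unfold e. rewrite RtoC_half. field.
  all: try (apply RtoC_ne0; lra).
Qed.

End ZB.

Lemma cb_plus (a b : C) (A B : R) : (Cmod a <= A)%R -> (Cmod b <= B)%R -> (Cmod (a + b) <= A + B)%R.
Proof. intros. eapply Rle_trans. apply Cmod_triangle. lra. Qed.
Lemma cb_minus (a b : C) (A B : R) : (Cmod a <= A)%R -> (Cmod b <= B)%R -> (Cmod (a - b) <= A + B)%R.
Proof. intros. eapply Rle_trans. apply Cmod_sub_le. lra. Qed.
Lemma cb_mult (a b : C) (A B : R) : (Cmod a <= A)%R -> (Cmod b <= B)%R -> (Cmod (a * b) <= A * B)%R.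
Proof. intros. rewrite Cmod_mult. apply Rmult_le_compat; auto; apply Cmod_ge_0. Qed.
Lemma cb_div (a b : C) (A B : R) : (Cmod a <= A)%R -> (Cmod (/ b) <= B)%R -> (Cmod (a / b) <= A * B)%R.
Proof. intros. apply cb_mult; auto. Qed.
Lemma cb_opp (a : C) (A : R) : (Cmod a <= A)%R -> (Cmod (- a) <= A)%R.
Proof. intros. rewrite Cmod_opp. auto. Qed.
Lemma cb_R (r : R) : (Cmod (RtoC r) <= Rabs r)%R.
Proof. rewrite Cmod_R. lra. Qed.
Lemma cb_invR (r : R) : r <> 0%R -> (Cmod (/ RtoC r) <= Rabs (/ r))%R.
Proof.
  intros H. rewrite Cmod_inv by (apply RtoC_ne0; auto). rewrite Cmod_R, Rabs_inv. lra.
Qed.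
Lemma cb_refl (a : C) : (Cmod a <= Cmod a)%R.
Proof. lra. Qed.

Ltac cbnd := first [ apply cb_plus; cbnd | apply cb_minus; cbnd | apply cb_div; cbnd | apply cb_mult; cbnd
                   | apply cb_opp; cbnd | apply cb_R | (apply cb_invR; nzr) | apply cb_refl ].

Ltac rabs_num := repeat match goal with
  | |- context [Rabs (IZR ?n)] => rewrite (Rabs_right (IZR n)) by lra
  | |- context [Rabs (/ IZR ?n)] => rewrite (Rabs_right (/ IZR n)) by (apply Rle_ge; left; apply Rinv_0_lt_compat; lra)
  end.

Section ZB2.
Variable z : C.
Hypothesis Hz : (Cmod (z - RtoC (1/2)) < dlt)%R.

Lemma Qm_bound : (Cmod (Q_minus z - RtoC q0 / 18) <= dlt)%R.
Proof.
  pose proof (Qm_identity z) as EQ. pose proof (qz_close z Hz) as Hq. pose proof q0_bounds as Hq0.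
  set (e := z - RtoC (1 / 2)) in *. set (cq := qz z - RtoC q0) in *. clearbody e cq.
  assert (H27 : (Cmod (RtoC 27 * (Q_minus z - RtoC q0 / 18)) <= 27 * dlt)%R).
  { rewrite EQ. eapply Rle_trans. cbnd. rabs_num. rewrite (Rabs_right q0) by lra.
    assert (He := Cmod_ge_0 e). assert (Hc := Cmod_ge_0 cq). unfold dlt in *. nra. }
  rewrite Cmod_mult, Cmod_R, Rabs_right in H27 by lra. lra.
Qed.

Lemma Qp_bound : (Cmod (Q_plus z + RtoC q0 / 18) <= dlt)%R.
Proof.
  pose proof (Qp_identity z) as EQ. pose proof (qz_close z Hz) as Hq. pose proof q0_bounds as Hq0.
  set (e := z - RtoC (1 / 2)) in *. set (cq := qz z - RtoC q0) in *. clearbody e cq.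
  assert (H27 : (Cmod (RtoC 27 * (Q_plus z + RtoC q0 / 18)) <= 27 * dlt)%R).
  { rewrite EQ. eapply Rle_trans. cbnd. rabs_num. rewrite (Rabs_right q0) by lra.
    assert (He := Cmod_ge_0 e). assert (Hc := Cmod_ge_0 cq). unfold dlt in *. nra. }
  rewrite Cmod_mult, Cmod_R, Rabs_right in H27 by lra. lra.
Qed.
End ZB2.

Definition xs (z : C) : C := (z + 1 - 2 * qz z) / 3.
Definition xss (z : C) : C := (z + 1 + 2 * qz z) / 3.
Definition Dd (z x : C) : C := - 3 * x * x + 2 * (z + 1) * x + (z - 1) * (z - 1).

Lemma Qplus_xs z : Q_plus z = Pz z (xs z).
Proof.
  assert (E : Pz z (w_plus z) - Pz z (xs z) = (w_plus z - xs z) * ((qz z * qz z - (z * z - z + 1)) / 3)).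
  { rewrite Pz_diff. f_equal. unfold Mdd, w_plus, xs, qz. field. }
  rewrite qz_sq in E. unfold Q_plus.
  replace (Pz z (w_plus z)) with (Pz z (w_plus z) - Pz z (xs z) + Pz z (xs z)) by ring.
  rewrite E. field.
Qed.

Lemma Dd_fact z x : RtoC 3 * (x - xs z) * (xss z - x) = Dd z x.
Proof.
  assert (E : RtoC 3 * (x - xs z) * (xss z - x) = Dd z x + 4 * (qz z * qz z - (z * z - z + 1)) / 3).
  { unfold xs, xss, Dd. field. }
  rewrite E, qz_sq. field.
Qed.

Lemma Re_div_pos (a b : C) : (0 < Re a * Re b + Im a * Im b)%R -> (0 < Re (a / b))%R.
Proof.
  destruct a as [a1 a2]; destruct b as [b1 b2]. simpl. intros H.
  assert (Hn : (0 < b1 ^ 2 + b2 ^ 2)%R).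
  { destruct (Req_dec b1 0); destruct (Req_dec b2 0); subst; try nra. }
  unfold Cinv, Cmult; simpl.
  match goal with |- (0 < ?X)%R =>
    replace X with ((a1 * b1 + a2 * b2) / (b1 * (b1 * 1) + b2 * (b2 * 1)))%R by (field; nzr) end.
  apply Rdiv_lt_0_compat; auto.
Qed.

Section ZB3.
Variable z : C.
Hypothesis Hz : (Cmod (z - RtoC (1/2)) < dlt)%R.

Lemma xs_close : (Cmod (xs z - RtoC ((3/2 - 2 * q0) / 3)) <= dlt)%R.
Proof.
  pose proof (qz_close z Hz) as Hq.
  replace (xs z - RtoC ((3/2 - 2 * q0) / 3)) with ((z - RtoC (1/2) - 2 * (qz z - RtoC q0)) / 3).
  2:{ unfold xs. rewrite RtoC_half. unfold RtoC. apply injective_projections; simpl; field. }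
  set (e := z - RtoC (1 / 2)) in *. set (cq := qz z - RtoC q0) in *. clearbody e cq.
  eapply Rle_trans. cbnd. rabs_num. unfold dlt in *. lra.
Qed.

Lemma xss_close : (Cmod (xss z - RtoC ((3/2 + 2 * q0) / 3)) <= dlt)%R.
Proof.
  pose proof (qz_close z Hz) as Hq.
  replace (xss z - RtoC ((3/2 + 2 * q0) / 3)) with ((z - RtoC (1/2) + 2 * (qz z - RtoC q0)) / 3).
  2:{ unfold xss. rewrite RtoC_half. unfold RtoC. apply injective_projections; simpl; field. }
  set (e := z - RtoC (1 / 2)) in *. set (cq := qz z - RtoC q0) in *. clearbody e cq.
  eapply Rle_trans. cbnd. rabs_num. unfold dlt in *. lra.
Qed.
End ZB3.

Definition R1 : R := (49/2000)%R.
Definition V1c : C := RtoC (3/125).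
Definition V0c : C := RtoC (-3/125).
Definition rs : R := (1/5000)%R.

Lemma RtoC_q018 : RtoC q0 / 18 = RtoC (q0 / 18).
Proof. unfold RtoC, Cdiv, Cinv, Cmult. apply injective_projections; simpl; field. Qed.

Lemma RtoC_minus' (a b : R) : RtoC (a - b) = RtoC a - RtoC b.
Proof. unfold RtoC. apply injective_projections; simpl; ring. Qed.
Lemma RtoC_opp' (a : R) : RtoC (- a) = - RtoC a.
Proof. unfold RtoC. apply injective_projections; simpl; ring. Qed.

Section ZB4.
Variable z : C.
Hypothesis Hz : (Cmod (z - RtoC (1/2)) < dlt)%R.

Lemma zb' : (Rabs (Re z - 1/2) < dlt /\ Rabs (Im z) < dlt)%R.
Proof. apply zb. exact Hz. Qed.

Lemma V_cond (m c : R) : (m = m1 /\ c = 3/125 \/ m = m0 /\ c = -3/125)%R ->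
  forall Q, Cdisc (RtoC c) R1 Q -> (Cmod (Pz z (RtoC m) - Q) <= cl * rh / 2)%R.
Proof.
  intros Hm Q HQ. unfold Cdisc in HQ.
  replace (Pz z (RtoC m) - Q) with ((Pz z (RtoC m) - RtoC c) - (Q - RtoC c)) by ring.
  eapply Rle_trans. apply Cmod_sub_le.
  assert (Cmod (Pz z (RtoC m) - RtoC c) <= 5/100000)%R.
  { destruct zb' as [Hr Hi]. unfold dlt in *. destruct z as [zr zi]. simpl in Hr, Hi.
    apply Rabs_def2 in Hr. apply Rabs_def2 in Hi.
    eapply Rle_trans; [apply Cmod_le_abs|]. unfold Pz. simpl.
    destruct Hm as [[-> ->]|[-> ->]]; unfold m1, m0; unfold Rabs; repeat destruct Rcase_abs; nra. }
  unfold R1, cl, rh in *. lra.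
Qed.

Lemma Qm_in_V1 : Cdisc V1c R1 (Q_minus z).
Proof.
  pose proof (Qm_bound z Hz). pose proof q0_bounds. unfold Cdisc, V1c.
  replace (Q_minus z - RtoC (3/125)) with ((Q_minus z - RtoC q0 / 18) + RtoC (q0 / 18 - 3/125)).
  2:{ rewrite RtoC_q018, RtoC_minus'. ring. }
  eapply Rle_lt_trans. apply Cmod_triangle. rewrite Cmod_R. unfold Rabs; destruct Rcase_abs;
  unfold R1, dlt in *; lra.
Qed.

Lemma Qp_disc_V0 Q : (Cmod (Q - Q_plus z) < rs)%R -> Cdisc V0c R1 Q.
Proof.
  intros HQ. pose proof (Qp_bound z Hz). pose proof q0_bounds. unfold Cdisc, V0c.
  replace (Q - RtoC (-3/125)) with ((Q - Q_plus z) + (Q_plus z + RtoC q0 / 18) - RtoC (q0 / 18 - 3/125)).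
  2:{ rewrite RtoC_q018, RtoC_minus'. replace (-3/125)%R with (-(3/125))%R by field.
       rewrite RtoC_opp'. ring. }
  eapply Rle_lt_trans. apply Cmod_sub_le. eapply Rle_lt_trans. apply Rplus_le_compat_r. apply Cmod_triangle.
  rewrite Cmod_R. unfold Rabs; destruct Rcase_abs; unfold R1, dlt, rs in *; lra.
Qed.

Lemma Qp_ne0 : Q_plus z <> 0.
Proof.
  intros HE. pose proof (Qp_bound z Hz). pose proof q0_bounds.
  assert (E2 : Q_plus z + RtoC q0 / 18 = RtoC (q0 / 18)) by (rewrite HE, RtoC_q018; ring).
  rewrite E2 in H.
  rewrite Cmod_R, Rabs_right in H by lra. unfold dlt in *. lra.
Qed.

Lemma xs_in_B0 : (Cmod (xs z - RtoC m0) <= rh)%R.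
Proof.
  pose proof (xs_close z Hz). pose proof q0_bounds.
  replace (xs z - RtoC m0) with ((xs z - RtoC ((3/2 - 2 * q0) / 3)) + RtoC ((3/2 - 2 * q0) / 3 - m0)).
  2:{ rewrite RtoC_minus'. ring. }
  eapply Rle_trans. apply Cmod_triangle. rewrite Cmod_R. unfold Rabs; destruct Rcase_abs;
  unfold m0, rh, dlt in *; lra.
Qed.

Lemma re_im_close (a : C) (c : R) (e : R) : (Cmod (a - RtoC c) <= e)%R ->
  (c - e <= Re a <= c + e /\ Rabs (Im a) <= e)%R.
Proof.
  intros H. pose proof (re_le_Cmod (a - RtoC c)). pose proof (im_le_Cmod' (a - RtoC c)).
  destruct a as [a1 a2]. simpl in *. replace (a2 + - 0)%R with a2 in * by ring.
  unfold Rabs in *; destruct Rcase_abs; destruct Rcase_abs; split; lra.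
Qed.

Lemma dPm0_re_im : (63/100 <= Re (dP z (RtoC m0)) /\ Rabs (Im (dP z (RtoC m0))) <= 1/5000)%R.
Proof.
  destruct zb' as [Hr Hi]. unfold dlt in *. destruct z as [zr zi]. simpl in Hr, Hi.
  apply Rabs_def2 in Hr. apply Rabs_def2 in Hi. unfold dP, m0. simpl.
  split; [nra|]. unfold Rabs; destruct Rcase_abs; nra.
Qed.

Lemma Rf_pos x : (Cmod (x - RtoC m0) <= rh)%R ->
  (0 < Re (RtoC 3 * (xss z - x) / Mdd z x (xs z)))%R.
Proof.
  intros Hx. apply Re_div_pos.
  pose proof (xss_close z Hz) as Hxss. pose proof q0_bounds.
  assert (HP := cparams_m z m0 zb' (or_intror eq_refl)).
  pose proof (M_bound z (RtoC m0) rh cl bb HP x (xs z) Hx xs_in_B0) as HM.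
  apply re_im_close in Hxss. apply re_im_close in Hx.
  pose proof dPm0_re_im as Hd.
  set (D := Mdd z x (xs z)) in *. set (c := dP z (RtoC m0)) in *.
  pose proof (re_le_Cmod (D - c)). pose proof (im_le_Cmod' (D - c)).
  replace (Re (D - c)) with (Re D - Re c)%R in H0 by (unfold Re; simpl; ring).
  replace (Im (D - c)) with (Im D - Im c)%R in H1 by (unfold Im; simpl; ring).
  replace (Re (RtoC 3 * (xss z - x))) with (3 * (Re (xss z) - Re x))%R by (unfold Re; simpl; ring).
  replace (Im (RtoC 3 * (xss z - x))) with (3 * (Im (xss z) - Im x))%R by (unfold Im; simpl; ring).
  set (a1 := (3 * (Re (xss z) - Re x))%R). set (a2 := (3 * (Im (xss z) - Im x))%R).
  unfold cl, rh, m0, dlt in *.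
  assert (Ha1 : (31/10 <= a1)%R) by (unfold a1; lra).
  assert (Ha2 : (Rabs a2 <= 26/100)%R).
  { unfold a2. unfold Rabs in *. repeat destruct Rcase_abs; lra. }
  assert (Hb1 : (3/10 <= Re D)%R). { unfold Rabs in *. repeat destruct Rcase_abs; lra. }
  assert (Hb2 : (Rabs (Im D) <= 33/100)%R). { unfold Rabs in *. repeat destruct Rcase_abs; lra. }
  assert (P1 : (31/10 * (3/10) <= a1 * Re D)%R) by (apply Rmult_le_compat; lra).
  assert (P2 : (Rabs (a2 * Im D) <= 26/100 * (33/100))%R).
  { rewrite Rabs_mult. apply Rmult_le_compat; auto; apply Rabs_pos. }
  pose proof (Rle_abs (- (a2 * Im D))). rewrite Rabs_Ropp in H2. lra.
Qed.

Lemma B0_far x : (Cmod (x - RtoC m0) <= rh)%R -> z + 1 - RtoC 3 * x <> 0.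
Proof.
  intros Hx HE. apply re_im_close in Hx. destruct zb' as [Hr _].
  assert (Re (z + 1 - RtoC 3 * x) = 0%R) by (rewrite HE; reflexivity).
  replace (Re (z + 1 - RtoC 3 * x)) with (Re z + 1 - 3 * Re x)%R in H by (unfold Re; simpl; ring).
  unfold m0, rh, dlt in *. unfold Rabs in *; repeat destruct Rcase_abs; lra.
Qed.
End ZB4.

Lemma Cmod_minus0 (Q : C) : Cmod (Q - 0) = Cmod Q.
Proof. replace (Q - 0) with Q by ring. reflexivity. Qed.

Lemma root_germ_ccont z rho c w : (0 < rho)%R -> root_germ z rho c w -> ccont w 0.
Proof.
  intros Hr [Hh _]. apply hol_ccont. apply ex_derive_hol. apply Hh. unfold Cdisc. rewrite Cmod_minus0, Cmod_0. auto.
Qed.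

Lemma cmod_const_diff (r : R) : Cmod (RtoC 1 - RtoC r) = Rabs (1 - r).
Proof. rewrite <- RtoC_minus'. apply Cmod_R. Qed.

Lemma far_apart (a b c d : C) (r : R) : (Cmod (a - c) < r)%R -> (Cmod (b - d) < r)%R ->
  (2 * r <= Cmod (c - d))%R -> a <> b.
Proof.
  intros H1 H2 H3 HE. subst b.
  replace (c - d) with (- (a - c) + (a - d)) in H3 by ring.
  pose proof (Cmod_triangle (- (a - c)) (a - d)). rewrite Cmod_opp in H. lra.
Qed.

Lemma germ_match z rho w0 w1 w2 g (e1 : R) :
  (Cmod (z - RtoC (1/2)) < dlt)%R -> (0 < rho)%R ->
  root_germ z rho 0 w0 -> root_germ z rho 1 w1 -> root_germ z rho z w2 ->
  ccont g 0 -> g 0 = 1 -> (0 < e1)%R -> (forall Q, (Cmod Q < e1)%R -> Pz z (g Q) = Q) ->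
  exists e, (0 < e)%R /\ forall Q, (Cmod Q < e)%R ->
     / ((w1 Q - w0 Q) * (w1 Q - w2 Q)) = / dP z (g Q).
Proof.
  intros Hz Hr G0 G1 G2 Hg Hg0 He1 HgP.
  pose proof (root_germ_ccont _ _ _ _ Hr G0) as C0.
  pose proof (root_germ_ccont _ _ _ _ Hr G1) as C1.
  pose proof (root_germ_ccont _ _ _ _ Hr G2) as C2.
  set (ep := (1/25)%R).
  destruct (C0 ep ltac:(unfold ep; lra)) as [d0 [Hd0 H0]].
  destruct (C1 ep ltac:(unfold ep; lra)) as [d1 [Hd1 H1]].
  destruct (C2 ep ltac:(unfold ep; lra)) as [d2 [Hd2 H2]].
  destruct (Hg ep ltac:(unfold ep; lra)) as [d3 [Hd3 H3]].
  set (e := Rmin (Rmin (Rmin e1 rho) (Rmin d0 d1)) (Rmin d2 d3)).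
  assert (He : (0 < e)%R) by (unfold e; repeat apply Rmin_pos; auto).
  exists e. split; auto. intros Q HQ.
  assert (Hm := fun a b => Rmin_l a b). assert (Hm' := fun a b => Rmin_r a b).
  assert (HQ' : (Cmod (Q - 0) < e)%R) by (rewrite Cmod_minus0; auto).
  assert (Qe1 : (Cmod Q < e1)%R) by (unfold e in HQ; pose proof (Hm (Rmin (Rmin e1 rho) (Rmin d0 d1)) (Rmin d2 d3)); pose proof (Hm (Rmin e1 rho) (Rmin d0 d1)); pose proof (Hm e1 rho); lra).
  assert (Qr : Cdisc 0 rho Q) by (unfold Cdisc; rewrite Cmod_minus0; unfold e in HQ; pose proof (Hm (Rmin (Rmin e1 rho) (Rmin d0 d1)) (Rmin d2 d3)); pose proof (Hm (Rmin e1 rho) (Rmin d0 d1)); pose proof (Hm' e1 rho); lra).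
  assert (Q0 : (Cmod (Q - 0) < d0)%R) by (unfold e in HQ'; pose proof (Hm (Rmin (Rmin e1 rho) (Rmin d0 d1)) (Rmin d2 d3)); pose proof (Hm' (Rmin e1 rho) (Rmin d0 d1)); pose proof (Hm d0 d1); lra).
  assert (Q1 : (Cmod (Q - 0) < d1)%R) by (unfold e in HQ'; pose proof (Hm (Rmin (Rmin e1 rho) (Rmin d0 d1)) (Rmin d2 d3)); pose proof (Hm' (Rmin e1 rho) (Rmin d0 d1)); pose proof (Hm' d0 d1); lra).
  assert (Q2 : (Cmod (Q - 0) < d2)%R) by (unfold e in HQ'; pose proof (Hm' (Rmin (Rmin e1 rho) (Rmin d0 d1)) (Rmin d2 d3)); pose proof (Hm d2 d3); lra).
  assert (Q3 : (Cmod (Q - 0) < d3)%R) by (unfold e in HQ'; pose proof (Hm' (Rmin (Rmin e1 rho) (Rmin d0 d1)) (Rmin d2 d3)); pose proof (Hm' d2 d3); lra).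
  specialize (H0 Q Q0). specialize (H1 Q Q1). specialize (H2 Q Q2). specialize (H3 Q Q3).
  destruct G0 as [_ [P0 E0]]. destruct G1 as [_ [P1 E1]]. destruct G2 as [_ [P2 E2]].
  rewrite E0 in H0. rewrite E1 in H1. rewrite E2 in H2. rewrite Hg0 in H3.
  specialize (P0 Q Qr). specialize (P1 Q Qr). specialize (P2 Q Qr). specialize (HgP Q Qe1).
  assert (HP1 := cparams_m z m1 (zb z Hz) (or_introl eq_refl)).
  assert (Hin : forall w, (Cmod (w - 1) < ep)%R -> (Cmod (w - RtoC m1) <= rh)%R).
  { intros w Hw. replace (w - RtoC m1) with ((w - 1) + (RtoC 1 - RtoC m1)) by ring.
    eapply Rle_trans. apply Cmod_triangle. rewrite cmod_const_diff.
    unfold ep, m1, rh in *. unfold Rabs; destruct Rcase_abs; lra. }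
  assert (Ew : w1 Q = g Q).
  { apply (root_unique z (RtoC m1) rh cl bb HP1); auto. rewrite P1, HgP. reflexivity. }
  destruct (zb z Hz) as [Hzr Hzi].
  assert (Hz1 : (Rabs (Re z) <= Cmod z)%R) by apply re_le_Cmod.
  assert (Hz2 : (Rabs (Re (1 - z)) <= Cmod (1 - z))%R) by apply re_le_Cmod.
  replace (Re (1 - z)) with (1 - Re z)%R in Hz2 by (unfold Re; simpl; ring).
  assert (N01 : w0 Q <> w1 Q).
  { apply (far_apart _ _ 0 1 ep); auto. replace (0 - 1) with (- RtoC 1) by ring. rewrite Cmod_opp, Cmod_1.
    unfold ep; lra. }
  assert (N21 : w2 Q <> w1 Q).
  { apply (far_apart _ _ z 1 ep); auto. replace (z - 1) with (- (1 - z)) by ring. rewrite Cmod_opp.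
    unfold ep, dlt in *. unfold Rabs in *. repeat destruct Rcase_abs; lra. }
  assert (N02 : w0 Q <> w2 Q).
  { apply (far_apart _ _ 0 z ep); auto. replace (0 - z) with (- z) by ring. rewrite Cmod_opp.
    unfold ep, dlt in *. unfold Rabs in *. repeat destruct Rcase_abs; lra. }
  rewrite (three_roots z (w0 Q) (w1 Q) (w2 Q)); auto.
  - rewrite Ew. reflexivity.
  - rewrite P0, P1; auto.
  - rewrite P2, P1; auto.
Qed.

Lemma disc_nbhd (c : C) (r : R) (Q : C) : Cdisc c r Q ->
  exists d, (0 < d)%R /\ forall y, (Cmod (y - Q) < d)%R -> Cdisc c r y.
Proof. intros H. apply (disc_open c r Q H). Qed.

Lemma croot_region z (m c : R) : (Cmod (z - RtoC (1/2)) < dlt)%R ->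
  (m = m1 /\ c = 3/125 \/ m = m0 /\ c = -3/125)%R ->
  (forall Q, Cdisc (RtoC c) R1 Q -> (Cmod (croot z (RtoC m) rh Q - RtoC m) <= rh)%R /\ Pz z (croot z (RtoC m) rh Q) = Q) /\
  (forall Q, Cdisc (RtoC c) R1 Q -> ccont (croot z (RtoC m) rh) Q) /\
  (forall Q, Cdisc (RtoC c) R1 Q -> hol (croot z (RtoC m) rh) Q) /\
  (forall Q, Cdisc (RtoC c) R1 Q -> dP z (croot z (RtoC m) rh Q) <> 0).
Proof.
  intros Hz Hm.
  assert (HP : cparams z (RtoC m) rh cl bb).
  { apply cparams_m. apply zb; auto. destruct Hm as [[-> _]|[-> _]]; auto. }
  set (g := croot z (RtoC m) rh).
  assert (S : forall Q, Cdisc (RtoC c) R1 Q -> (Cmod (g Q - RtoC m) <= rh)%R /\ Pz z (g Q) = Q).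
  { intros Q HQ. apply (croot_spec z (RtoC m) rh cl bb Q HP). apply (V_cond z Hz m c Hm Q HQ). }
  assert (Cc : forall Q, Cdisc (RtoC c) R1 Q -> ccont g Q).
  { intros Q HQ. apply ccont_lip with (2 / cl)%R.
    destruct (disc_nbhd _ _ _ HQ) as [d [Hd Hy]]. exists d. split; auto.
    intros y Hy1. destruct (S y (Hy y Hy1)) as [Ay By]. destruct (S Q HQ) as [AQ BQ].
    eapply Rle_trans. apply (root_lip z (RtoC m) rh cl bb HP); auto. rewrite By, BQ. lra. }
  assert (Nz : forall Q, Cdisc (RtoC c) R1 Q -> dP z (g Q) <> 0).
  { intros Q HQ. destruct (S Q HQ) as [AQ _]. rewrite <- Mdd_diag. apply (Mdd_ne0 z (RtoC m) rh cl bb HP); auto. }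
  split; [exact S|]. split; [exact Cc|]. split; [|exact Nz].
  intros Q HQ. apply (root_hol z); auto.
  destruct (disc_nbhd _ _ _ HQ) as [d [Hd Hy]]. exists d. split; auto.
  intros y Hy1. apply S. auto.
Qed.

Lemma Pz_1 z : Pz z 1 = 0.
Proof. unfold Pz. ring. Qed.
Lemma Pz_0 z : Pz z 0 = 0.
Proof. unfold Pz. ring. Qed.

Lemma part1 z rho w0 w1 w2 : (Cmod (z - RtoC (1/2)) < dlt)%R -> (0 < rho)%R ->
  root_germ z rho 0 w0 -> root_germ z rho 1 w1 -> root_germ z rho z w2 ->
  exists (U : C -> Prop) (F : C -> C),
    Cconvex U /\ continues_germ U F (fun Q => / ((w1 Q - w0 Q) * (w1 Q - w2 Q))) /\ U (Q_minus z).
Proof.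
  intros Hz Hr G0 G1 G2.
  destruct (croot_region z m1 (3/125) Hz (or_introl (conj eq_refl eq_refl))) as [S [Cc [Hh Nz]]].
  set (g := croot z (RtoC m1) rh) in *.
  exists (Cdisc V1c R1), (fun Q => / dP z (g Q)).
  assert (H0in : Cdisc V1c R1 0).
  { unfold Cdisc, V1c. replace (0 - RtoC (3/125)) with (RtoC (- (3/125))) by (rewrite RtoC_opp'; ring).
    rewrite Cmod_R. unfold R1. rewrite Rabs_left by lra. lra. }
  split; [apply disc_convex|]. split; [|apply Qm_in_V1; auto].
  split; [auto|]. split; [apply disc_open|]. split.
  - intros Q HQ. apply hol_ex_derive. apply hol_inv; auto. apply hol_dP. auto.
  - assert (Hg0 : g 0 = 1).
    { destruct (S 0 H0in) as [A0 B0].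
      apply (root_unique z (RtoC m1) rh cl bb (cparams_m z m1 (zb z Hz) (or_introl eq_refl))); auto.
      rewrite cmod_const_diff. unfold m1, rh. rewrite Rabs_left by lra. lra.
      rewrite B0, Pz_1. reflexivity. }
    set (e1 := (R1 - 3/125)%R).
    assert (He1 : (0 < e1)%R) by (unfold e1, R1; lra).
    assert (Hsub : forall Q, (Cmod Q < e1)%R -> Cdisc V1c R1 Q).
    { intros Q HQ. unfold Cdisc, V1c. eapply Rle_lt_trans. apply Cmod_sub_le. rewrite Cmod_R.
      rewrite Rabs_right by lra. unfold e1 in HQ. lra. }
    destruct (germ_match z rho w0 w1 w2 g e1 Hz Hr G0 G1 G2 (Cc 0 H0in) Hg0 He1) as [e [He HE]].
    { intros Q HQ. apply S. auto. }
    exists (Rmin e e1). split; [apply Rmin_pos; auto|].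
    intros Q HQ. unfold Cdisc in HQ. rewrite Cmod_minus0 in HQ.
    split.
    + apply Hsub. pose proof (Rmin_r e e1). lra.
    + symmetry. apply HE. pose proof (Rmin_l e e1). lra.
Qed.

Section Alg.
Variables (z g d : C).
Hypothesis Hd : d * d = Dd z g.

Let w := (z + 1 - g + d) / 2.
Let e1 := (z + 1 - RtoC 3 * g + d) / 2.
Let e2 := (z + 1 - RtoC 3 * g - d) / 2.

Lemma alg_root : Pz z w = Pz z g.
Proof.
  assert (E : Pz z w - Pz z g = (w - g) * ((d * d - Dd z g) / 4)).
  { rewrite Pz_diff. f_equal. unfold Mdd, Dd, w. field. }
  rewrite Hd in E. replace (Pz z w) with (Pz z w - Pz z g + Pz z g) by ring. rewrite E. field.
Qed.

Lemma alg_dPw : dP z w = e1 * d.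
Proof.
  assert (E : dP z w - e1 * d = (d * d - Dd z g) / 4) by (unfold dP, Dd, w, e1; field).
  rewrite Hd in E. replace (dP z w) with (dP z w - e1 * d + e1 * d) by ring. rewrite E. field.
Qed.

Lemma alg_e1e2 : e1 * e2 = dP z g.
Proof.
  assert (E : e1 * e2 - dP z g = - (d * d - Dd z g) / 4) by (unfold dP, Dd, e1, e2; field).
  rewrite Hd in E. replace (e1 * e2) with (e1 * e2 - dP z g + dP z g) by ring. rewrite E. field.
Qed.
End Alg.

Lemma alg_F z g s k : (s * k) * (s * k) = Dd z g -> dP z g <> 0 -> s <> 0 -> k <> 0 ->
  / dP z ((z + 1 - g + s * k) / 2) = - / (2 * dP z g) + (z + 1 - RtoC 3 * g) / (2 * dP z g * k) / s.
Proof.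
  intros Hd Hg Hs Hk.
  rewrite (alg_dPw z g (s * k) Hd). rewrite <- (alg_e1e2 z g (s * k) Hd) in *.
  set (e1 := (z + 1 - RtoC 3 * g + s * k) / 2) in *.
  set (e2 := (z + 1 - RtoC 3 * g - s * k) / 2) in *.
  assert (H1 : e1 <> 0) by (intro E; apply Hg; rewrite E; ring).
  assert (H2 : e2 <> 0) by (intro E; apply Hg; rewrite E; ring).
  replace (z + 1 - RtoC 3 * g) with (e1 + e2) by (unfold e1, e2; field).
  assert (Hsk : s * k = e1 - e2) by (unfold e1, e2; field).
  rewrite Hsk.
  assert (Hne : e1 - e2 <> 0) by (rewrite <- Hsk; apply Cmult_neq_0; auto).
  replace (e1 + e2) with (RtoC 2 * e2 + (e1 - e2)) by ring.
  rewrite <- Hsk. field. repeat split; auto.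
Qed.

Definition g0 z := croot z (RtoC m0) rh.
Definition Rf z Q := RtoC 3 * (xss z - g0 z Q) / Mdd z (g0 z Q) (xs z).
Definition kf z Q := Csqrt (Rf z Q).
Definition Sf z Q := Csqrt (- (Q - Q_plus z) * Cconj (Q_plus z)) * Csqrt (- / Cconj (Q_plus z)).
Definition epsz z := (1 - z) / (Sf z 0 * kf z 0).
Definition sf z Q := epsz z * Sf z Q.
Definition w1f z Q := (z + 1 - g0 z Q + sf z Q * kf z Q) / 2.
Definition Ff z Q := / dP z (w1f z Q).
Definition Af z Q := - / (2 * dP z (g0 z Q)).
Definition Bf z Q := (z + 1 - RtoC 3 * g0 z Q) / (2 * dP z (g0 z Q) * kf z Q).
Definition Uf z Q := Cdisc V0c R1 Q /\ (Re ((Q - Q_plus z) * Cconj (Q_plus z)) < 0)%R.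

Lemma Cconj_ne0 (a : C) : a <> 0 -> Cconj a <> 0.
Proof. intros H E. apply H. rewrite <- (Cconj_conj a), E. unfold Cconj. simpl.
  unfold RtoC. f_equal. ring. Qed.

Lemma Csqrt_ne0 (a : C) : (0 < Re a)%R -> Csqrt a <> 0.
Proof. intros H E. pose proof (Csqrt_re_pos a H). rewrite E in H0. simpl in H0. lra. Qed.

Section P2.
Variable z : C.
Hypothesis Hz : (Cmod (z - RtoC (1/2)) < dlt)%R.

Definition V0 := Cdisc V0c R1.

Lemma P2_g0 : (forall Q, V0 Q -> (Cmod (g0 z Q - RtoC m0) <= rh)%R /\ Pz z (g0 z Q) = Q) /\
  (forall Q, V0 Q -> ccont (g0 z) Q) /\ (forall Q, V0 Q -> hol (g0 z) Q) /\
  (forall Q, V0 Q -> dP z (g0 z Q) <> 0).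
Proof. apply (croot_region z m0 (-3/125) Hz). right; split; reflexivity. Qed.

Lemma P2_Mne Q : V0 Q -> Mdd z (g0 z Q) (xs z) <> 0.
Proof.
  intros HQ. destruct P2_g0 as [S _]. destruct (S Q HQ) as [A _].
  apply (Mdd_ne0 z (RtoC m0) rh cl bb (cparams_m z m0 (zb z Hz) (or_intror eq_refl))); auto.
  apply xs_in_B0; auto.
Qed.

Lemma P2_Rfpos Q : V0 Q -> (0 < Re (Rf z Q))%R.
Proof. intros HQ. destruct P2_g0 as [S _]. destruct (S Q HQ) as [A _]. apply Rf_pos; auto. Qed.

Lemma P2_ksq Q : kf z Q * kf z Q = Rf z Q.
Proof. apply Csqrt_sq. Qed.

Lemma P2_kre Q : V0 Q -> (0 < Re (kf z Q))%R.
Proof. intros HQ. apply Csqrt_re_pos. apply P2_Rfpos; auto. Qed.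

Lemma P2_kne Q : V0 Q -> kf z Q <> 0.
Proof. intros HQ. apply Csqrt_ne0. apply P2_Rfpos; auto. Qed.

Lemma P2_Rf_cc Q : V0 Q -> ccont (Rf z) Q.
Proof.
  intros HQ. destruct P2_g0 as [_ [C _]]. unfold Rf. apply ccont_mult.
  - cc. apply C; auto.
  - apply ccont_inv. apply ccont_Mdd. apply C; auto. apply P2_Mne; auto.
Qed.

Lemma P2_k_cc Q : V0 Q -> ccont (kf z) Q.
Proof.
  intros HQ. unfold kf. apply (ccont_comp (Rf z) Csqrt). apply P2_Rf_cc; auto.
  apply ccont_Csqrt. apply Csqrt_re_pos. apply P2_Rfpos; auto.
Qed.

Lemma P2_Rf_hol Q : V0 Q -> hol (Rf z) Q.
Proof.
  intros HQ. destruct P2_g0 as [_ [_ [H _]]]. unfold Rf. apply hol_mult.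
  - apply hol_scal. apply hol_minus. apply hol_const. apply H; auto.
  - apply hol_inv. apply hol_Mdd. apply H; auto. apply P2_Mne; auto.
Qed.

Lemma P2_k_hol Q : V0 Q -> hol (kf z) Q.
Proof.
  intros HQ. apply sqrt_hol with (Rf z).
  - apply P2_k_cc; auto.
  - exists 1%R. split; [lra|]. intros; apply P2_ksq.
  - apply P2_kne; auto.
  - apply P2_Rf_hol; auto.
Qed.

Lemma P2_diffQ Q : V0 Q -> Q - Q_plus z = (g0 z Q - xs z) * Mdd z (g0 z Q) (xs z).
Proof.
  intros HQ. destruct P2_g0 as [S _]. destruct (S Q HQ) as [_ B].
  rewrite <- Pz_diff, B, Qplus_xs. reflexivity.
Qed.

Lemma P2_cne : Cconj (Q_plus z) <> 0.
Proof. apply Cconj_ne0. apply Qp_ne0; auto. Qed.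

Lemma P2_Ssq Q : Sf z Q * Sf z Q = Q - Q_plus z.
Proof.
  unfold Sf.
  replace (Csqrt (- (Q - Q_plus z) * Cconj (Q_plus z)) * Csqrt (- / Cconj (Q_plus z)) *
     (Csqrt (- (Q - Q_plus z) * Cconj (Q_plus z)) * Csqrt (- / Cconj (Q_plus z))))
    with ((Csqrt (- (Q - Q_plus z) * Cconj (Q_plus z)) * Csqrt (- (Q - Q_plus z) * Cconj (Q_plus z))) *
          (Csqrt (- / Cconj (Q_plus z)) * Csqrt (- / Cconj (Q_plus z)))) by ring.
  rewrite !Csqrt_sq. field. apply P2_cne.
Qed.

Lemma P2_Skd Q : V0 Q -> (Sf z Q * kf z Q) * (Sf z Q * kf z Q) = Dd z (g0 z Q).
Proof.
  intros HQ.
  replace ((Sf z Q * kf z Q) * (Sf z Q * kf z Q)) with ((Sf z Q * Sf z Q) * (kf z Q * kf z Q)) by ring.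
  rewrite P2_Ssq, P2_ksq, (P2_diffQ Q HQ). unfold Rf. rewrite <- Dd_fact. field. apply P2_Mne; auto.
Qed.

Lemma V0_0 : V0 0.
Proof.
  unfold V0, Cdisc, V0c. replace (0 - RtoC (-3/125)) with (RtoC (3/125)).
  2:{ replace (-3/125)%R with (-(3/125))%R by field. rewrite RtoC_opp'. ring. }
  rewrite Cmod_R. unfold R1. rewrite Rabs_right by lra. lra.
Qed.

Lemma P2_g00 : g0 z 0 = 0.
Proof.
  destruct P2_g0 as [S _]. destruct (S 0 V0_0) as [A B].
  apply (root_unique z (RtoC m0) rh cl bb (cparams_m z m0 (zb z Hz) (or_intror eq_refl))); auto.
  replace (0 - RtoC m0) with (RtoC (- m0)) by (rewrite RtoC_opp'; ring).
  rewrite Cmod_R. unfold m0, rh. rewrite Rabs_right by lra. lra.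
  rewrite B, Pz_0. reflexivity.
Qed.

Lemma P2_S0k0 : Sf z 0 * kf z 0 <> 0.
Proof.
  apply Cmult_neq_0.
  - intro E. apply (Qp_ne0 z Hz). pose proof (P2_Ssq 0) as H. rewrite E in H.
    replace (Q_plus z) with (- (0 - Q_plus z)) by ring. rewrite <- H. ring.
  - apply P2_kne, V0_0.
Qed.

Lemma P2_eps2 : epsz z * epsz z = 1.
Proof.
  pose proof (P2_Skd 0 V0_0) as H. rewrite P2_g00 in H.
  unfold epsz.
  assert (Hz1 : 1 - z <> 0).
  { intro E. destruct (zb z Hz) as [Hr _]. assert (Re (1 - z) = 0%R) by (rewrite E; reflexivity).
    replace (Re (1 - z)) with (1 - Re z)%R in H0 by (unfold Re; simpl; ring).
    unfold dlt in *. unfold Rabs in Hr; destruct Rcase_abs; lra. }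
  replace ((1 - z) / (Sf z 0 * kf z 0) * ((1 - z) / (Sf z 0 * kf z 0))) with
    ((1 - z) * (1 - z) / ((Sf z 0 * kf z 0) * (Sf z 0 * kf z 0))) by (pose proof P2_S0k0 as HS;
       field; split; intro E; apply HS; rewrite E; ring).
  rewrite H. replace (Dd z 0) with ((1 - z) * (1 - z)) by (unfold Dd; ring).
  field. exact Hz1.
Qed.

Lemma P2_ssq Q : sf z Q * sf z Q = Q - Q_plus z.
Proof.
  unfold sf. replace (epsz z * Sf z Q * (epsz z * Sf z Q)) with ((epsz z * epsz z) * (Sf z Q * Sf z Q)) by ring.
  rewrite P2_eps2, P2_Ssq. ring.
Qed.

Lemma P2_skd Q : V0 Q -> (sf z Q * kf z Q) * (sf z Q * kf z Q) = Dd z (g0 z Q).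
Proof.
  intros HQ. unfold sf.
  replace (epsz z * Sf z Q * kf z Q * (epsz z * Sf z Q * kf z Q)) with
    ((epsz z * epsz z) * ((Sf z Q * kf z Q) * (Sf z Q * kf z Q))) by ring.
  rewrite P2_eps2, P2_Skd; auto. ring.
Qed.

Lemma P2_w1root Q : V0 Q -> Pz z (w1f z Q) = Q.
Proof.
  intros HQ. unfold w1f. rewrite (alg_root z (g0 z Q) (sf z Q * kf z Q) (P2_skd Q HQ)).
  destruct P2_g0 as [S _]. apply (S Q HQ).
Qed.

Lemma P2_w10 : w1f z 0 = 1.
Proof.
  unfold w1f, sf, epsz. rewrite P2_g00. pose proof P2_S0k0 as HS.
  field; split; intro E; apply HS; rewrite E; ring.
Qed.
End P2.

Lemma Re_plus (a b : C) : Re (a + b) = (Re a + Re b)%R.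
Proof. reflexivity. Qed.

Section P2b.
Variable z : C.
Hypothesis Hz : (Cmod (z - RtoC (1/2)) < dlt)%R.

Lemma P2_HP Q : Uf z Q -> (0 < Re (- (Q - Q_plus z) * Cconj (Q_plus z)))%R.
Proof.
  intros [_ H]. replace (- (Q - Q_plus z) * Cconj (Q_plus z)) with (- ((Q - Q_plus z) * Cconj (Q_plus z))) by ring.
  unfold Re in *. simpl. simpl in H. lra.
Qed.

Lemma P2_S_cc Q : Uf z Q -> ccont (Sf z) Q.
Proof.
  intros HU. unfold Sf. apply ccont_mult; [|apply ccont_const].
  apply (ccont_comp (fun y => - (y - Q_plus z) * Cconj (Q_plus z)) Csqrt).
  - cc.
  - apply ccont_Csqrt. apply Csqrt_re_pos. apply P2_HP; auto.
Qed.

Lemma P2_s_cc Q : Uf z Q -> ccont (sf z) Q.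
Proof. intros HU. unfold sf. apply ccont_mult. apply ccont_const. apply P2_S_cc; auto. Qed.

Lemma P2_s_ne Q : Uf z Q -> sf z Q <> 0.
Proof.
  intros HU E. pose proof (P2_ssq z Hz Q) as H. rewrite E in H.
  destruct HU as [_ HH]. replace (Q - Q_plus z) with (RtoC 0) in HH by (rewrite <- H; ring).
  rewrite Cmult_0_l in HH. simpl in HH. lra.
Qed.

Lemma P2_w1_cc Q : Uf z Q -> ccont (w1f z) Q.
Proof.
  intros HU. destruct HU as [HV HH]. destruct (P2_g0 z Hz) as [_ [C _]].
  unfold w1f. apply ccont_mult; [|apply ccont_const].
  apply ccont_plus. cc. apply C; auto.
  apply ccont_mult. apply P2_s_cc; split; auto. apply P2_k_cc; auto.
Qed.

Lemma P2_dPw1_ne Q : Uf z Q -> dP z (w1f z Q) <> 0.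
Proof.
  intros HU. pose proof HU as [HV _]. unfold w1f.
  set (d := sf z Q * kf z Q).
  assert (Hd : d * d = Dd z (g0 z Q)) by (apply P2_skd; auto).
  rewrite (alg_dPw z (g0 z Q) d Hd). apply Cmult_neq_0.
  - intro E. destruct (P2_g0 z Hz) as [_ [_ [_ N]]]. apply (N Q HV).
    rewrite <- (alg_e1e2 z (g0 z Q) d Hd). rewrite E. ring.
  - unfold d. apply Cmult_neq_0. apply P2_s_ne; auto. apply P2_kne; auto.
Qed.

Lemma Uf_open : Copen (Uf z).
Proof.
  intros Q [HV HH]. destruct (disc_open _ _ Q HV) as [d1 [Hd1 H1]].
  set (c := Cconj (Q_plus z)) in *.
  set (gam := (- Re ((Q - Q_plus z) * c))%R).
  assert (Hg : (0 < gam)%R) by (unfold gam; lra).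
  exists (Rmin d1 (gam / (Cmod c + 1))). split.
  { apply Rmin_pos; auto. apply Rdiv_lt_0_compat; auto. pose proof (Cmod_ge_0 c); lra. }
  intros y Hy. unfold Cdisc in Hy. split.
  - apply H1. unfold Cdisc. pose proof (Rmin_l d1 (gam / (Cmod c + 1))); lra.
  - change (Re ((y - Q_plus z) * c) < 0)%R.
    replace ((y - Q_plus z) * c) with ((Q - Q_plus z) * c + (y - Q) * c) by ring.
    rewrite Re_plus. pose proof (re_le_Cmod' ((y - Q) * c)). rewrite Cmod_mult in H.
    assert (Hy2 : (Cmod (y - Q) < gam / (Cmod c + 1))%R) by (pose proof (Rmin_r d1 (gam / (Cmod c + 1))); lra).
    assert (Hc := Cmod_ge_0 c). assert (Hyq := Cmod_ge_0 (y - Q)).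
    assert (Cmod (y - Q) * (Cmod c + 1) < gam)%R.
    { apply (Rmult_lt_compat_r (Cmod c + 1)) in Hy2; [|lra].
      replace (gam / (Cmod c + 1) * (Cmod c + 1))%R with gam in Hy2 by (field; nzr). lra. }
    unfold gam in *. nra.
Qed.

Lemma Uf_convex : Cconvex (Uf z).
Proof.
  intros x y t [Hx1 Hx2] [Hy1 Hy2] Ht. split.
  - apply disc_convex; auto.
  - set (c := Cconj (Q_plus z)) in *.
    replace ((x + RtoC t * (y - x) - Q_plus z) * c) with
      (RtoC (1 - t) * ((x - Q_plus z) * c) + RtoC t * ((y - Q_plus z) * c)) by (rewrite RtoC_minus'; ring).
    rewrite Re_plus, !re_scal_l.
    destruct (Req_dec t 0). subst. lra. nra.
Qed.

Lemma Uf_0 : Uf z 0.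
Proof.
  split. apply V0_0.
  pose proof (Qp_ne0 z Hz) as H. destruct (Q_plus z) as [a b]. unfold Cconj. simpl.
  assert (0 < a * a + b * b)%R.
  { destruct (Req_dec a 0); destruct (Req_dec b 0); subst; try nra. exfalso; apply H. reflexivity. }
  nra.
Qed.

Lemma Uf_seg (t : R) : (0 <= t < 1)%R -> Uf z (RtoC t * Q_plus z).
Proof.
  intros Ht. split.
  - replace (RtoC t * Q_plus z) with (0 + RtoC t * (Q_plus z - 0)) by ring.
    apply disc_convex; [apply V0_0| |lra].
    apply (Qp_disc_V0 z Hz). replace (Q_plus z - Q_plus z) with (RtoC 0) by ring. rewrite Cmod_0. unfold rs; lra.
  - pose proof (Qp_ne0 z Hz) as H. destruct (Q_plus z) as [a b]. unfold Cconj. simpl.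
    assert (0 < a * a + b * b)%R.
    { destruct (Req_dec a 0); destruct (Req_dec b 0); subst; try nra. exfalso; apply H. reflexivity. }
    nra.
Qed.
End P2b.

Lemma part2 z rho w0 w1 w2 : (Cmod (z - RtoC (1/2)) < dlt)%R -> (0 < rho)%R ->
  root_germ z rho 0 w0 -> root_germ z rho 1 w1 -> root_germ z rho z w2 ->
  exists (U : C -> Prop) (F : C -> C) (r : R) (A B s : C -> C),
        Cconvex U /\ continues_germ U F (fun Q => / ((w1 Q - w0 Q) * (w1 Q - w2 Q))) /\
        (forall t : R, (0 <= t < 1)%R -> U (RtoC t * Q_plus z)) /\
        (0 < r)%R /\
        holo_on (Cdisc (Q_plus z) r) A /\ holo_on (Cdisc (Q_plus z) r) B /\
        B (Q_plus z) <> 0 /\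
        (forall Q, U Q -> Cdisc (Q_plus z) r Q ->
           continuous s Q /\ s Q * s Q = Q - Q_plus z /\
           F Q = A Q + B Q / s Q).
Proof.
  intros Hz Hr G0 G1 G2.
  destruct (P2_g0 z Hz) as [GS [GC [GH GN]]].
  assert (HinV : forall Q, Cdisc (Q_plus z) rs Q -> V0 Q).
  { intros Q HQ. apply (Qp_disc_V0 z Hz). exact HQ. }
  assert (Hw1hol : forall Q, Uf z Q -> hol (w1f z) Q).
  { intros Q HU. apply (root_hol z). apply P2_w1_cc; auto.
    destruct (Uf_open z Q HU) as [d [Hd Hy]]. exists d. split; auto.
    intros y Hy1. apply P2_w1root; auto. apply Hy. exact Hy1.
    apply P2_dPw1_ne; auto. }
  exists (Uf z), (Ff z), rs, (Af z), (Bf z), (sf z).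
  split; [apply Uf_convex; auto|].
  split.
  { split; [apply Uf_0; auto|]. split; [apply Uf_open; auto|]. split.
    - intros Q HU. apply hol_ex_derive. unfold Ff. apply hol_inv. apply hol_dP. apply Hw1hol; auto.
      apply P2_dPw1_ne; auto.
    - destruct (Uf_open z 0 (Uf_0 z Hz)) as [d0 [Hd0 Hy0]].
      assert (HU0 : forall Q, (Cmod Q < d0)%R -> Uf z Q).
      { intros Q HQ. apply Hy0. unfold Cdisc. rewrite Cmod_minus0. auto. }
      destruct (germ_match z rho w0 w1 w2 (w1f z) d0 Hz Hr G0 G1 G2
                  (P2_w1_cc z Hz 0 (Uf_0 z Hz)) (P2_w10 z Hz) Hd0) as [e [He HE]].
      { intros Q HQ. apply P2_w1root; auto. apply HU0; auto. }
      exists (Rmin e d0). split; [apply Rmin_pos; auto|].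
      intros Q HQ. unfold Cdisc in HQ. rewrite Cmod_minus0 in HQ. split.
      + apply HU0. pose proof (Rmin_r e d0). lra.
      + unfold Ff. symmetry. apply HE. pose proof (Rmin_l e d0). lra. }
  split; [intros t Ht; apply Uf_seg; auto|].
  split; [unfold rs; lra|].
  assert (Hden : forall Q, V0 Q -> 2 * dP z (g0 z Q) <> 0).
  { intros Q HQ. apply Cmult_neq_0. intro E; apply (f_equal fst) in E; simpl in E; lra. apply GN; auto. }
  split.
  { intros Q HQ. apply hol_ex_derive. unfold Af. apply hol_opp. apply hol_inv.
    apply hol_scal. apply hol_dP. apply GH; auto. apply Hden; auto. }
  split.
  { intros Q HQ. apply hol_ex_derive. unfold Bf. apply hol_div.
    - apply hol_minus. apply hol_const. apply hol_scal. apply GH; auto.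
    - apply hol_mult. apply hol_scal. apply hol_dP. apply GH; auto. apply P2_k_hol; auto.
    - apply Cmult_neq_0. apply Hden; auto. apply P2_kne; auto. }
  split.
  { assert (HQp : V0 (Q_plus z)).
    { apply HinV. unfold Cdisc. replace (Q_plus z - Q_plus z) with (RtoC 0) by ring. rewrite Cmod_0. unfold rs; lra. }
    unfold Bf. apply Cmult_neq_0.
    - replace (z + 1 - RtoC 3 * g0 z (Q_plus z)) with (z + 1 - RtoC 3 * g0 z (Q_plus z)) by reflexivity.
      apply B0_far; auto. apply GS; auto.
    - apply Cinv_ne0. apply Cmult_neq_0. apply Hden; auto. apply P2_kne; auto. }
  intros Q HU HQ. split; [|split].
  - apply ccont_continuous. apply P2_s_cc; auto.
  - apply P2_ssq; auto.
  - unfold Ff, Af, Bf, w1f. apply alg_F.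
    all: first [ apply P2_skd; auto; destruct HU; auto | apply GN; destruct HU; auto
               | apply P2_s_ne; auto | apply P2_kne; destruct HU; auto ].
Qed.

Theorem lemma2p2 :
  exists delta : R, (0 < delta)%R /\
  forall z : C, Cdisc (RtoC (1 / 2)) delta z ->
  forall (rho : R) (w0 w1 w2 : C -> C),
    (0 < rho)%R ->
    root_germ z rho 0 w0 -> root_germ z rho 1 w1 -> root_germ z rho z w2 ->
    let H := fun Q : C => / ((w1 Q - w0 Q) * (w1 Q - w2 Q)) in
    (exists (U : C -> Prop) (F : C -> C),
        Cconvex U /\ continues_germ U F H /\ U (Q_minus z)) /\
    (exists (U : C -> Prop) (F : C -> C) (r : R) (A B s : C -> C),
        Cconvex U /\ continues_germ U F H /\
        (forall t : R, (0 <= t < 1)%R -> U (RtoC t * Q_plus z)) /\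
        (0 < r)%R /\
        holo_on (Cdisc (Q_plus z) r) A /\ holo_on (Cdisc (Q_plus z) r) B /\
        B (Q_plus z) <> 0 /\
        (forall Q, U Q -> Cdisc (Q_plus z) r Q ->
           continuous s Q /\ s Q * s Q = Q - Q_plus z /\
           F Q = A Q + B Q / s Q)).
Proof.
  exists dlt. split; [unfold dlt; lra|].
  intros z Hz rho w0 w1 w2 Hr G0 G1 G2. cbv zeta. unfold Cdisc in Hz.
  split.
  - apply part1 with rho; auto.
  - apply part2 with rho; auto.
Qed.
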